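(* Let ${}_{\mathfrak Y}\mathfrak B_{\mathfrak X}$ be a left-fibrant graph of bisets and ${}_{\mathfrak X}\mathfrak C_{\mathfrak W}$ a graph of bisets, and let $\dagger\in\mathfrak Y$, $*\in\mathfrak X$, $\ddagger\in\mathfrak W$ be vertices. Then the biset morphism \[\pi_1(\mathfrak B\otimes_{\mathfrak X}\mathfrak C,\dagger,\ddagger)\to\pi_1(\mathfrak B,\dagger,* )\otimes_{\pi_1(\mathfrak X,* )}\pi_1(\mathfrak C,*,\ddagger),\qquad q(b\otimes c)r\mapsto(qbp)\otimes(p^{-1}cr)\] (for $(v,w)$ a vertex of $\mathfrak B\otimes_{\mathfrak X}\mathfrak C$, $b\otimes c\in B_v\otimes B_w$, $q\in\pi_1(\mathfrak Y,\dagger,\lambda(v))$, $r\in\pi_1(\mathfrak W,\rho(w),\ddagger)$, and any $p\in\pi_1(\mathfrak X,\rho(v),* )$) is an isomorphism.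
   Context: Graphs and graphs of groups. A graph is a set $V\sqcup E$ with maps $x\mapsto x^-\in V$, $x\mapsto\bar x$, $\bar{\bar x}=x$, $x=x^-\iff x=\bar x\iff x\in V$; $x^+=(\bar x)^-$. Graph morphisms commute with these (may send edges to vertices); simplicial ones send edges to edges. A graph of groups is a connected graph with groups $G_x$ and homomorphisms $g\mapsto g^-\colon G_x\to G_{x^-}$, $g\mapsto\bar g\colon G_x\to G_{\bar x}$ ($G_x\to G_{\bar x}\to G_x$ identity, both identity for vertices), $g^+=(\bar g)^-$. Its fundamental groupoid $\pi_1(\mathfrak X)$ has objects $V$, generated by the $x\in\mathfrak X$ (from $x^-$ to $x^+$) and the elements of the $G_v$, subject to the relations of the $G_v$, $v=1\in G_v$, $x\bar x=1$, $g^-x=xg^+$; $\pi_1(\mathfrak X,v,w)$ = morphisms from $v$ to $w$. Graphs of bisets. A $\mathfrak Y$-$\mathfrak X$ graph of bisets: graph $\mathfrak B$, graph morphisms $\lambda\colon\mathfrak B\to\mathfrak Y$, $\rho\colon\mathfrak B\to\mathfrak X$, $G_{\lambda(z)}$-$G_{\rho(z)}$-bisets $B_z$ and congruences $b\mapsto b^-\colon B_z\to B_{z^-}$, $b\mapsto\bar b\colon B_z\to B_{\bar z}$ w.r.t. the group homomorphisms (same axioms), $b^+=(\bar b)^-$. Fundamental biset $\pi_1(\mathfrak B,\dagger,* )$: $\bigsqcup_{z\in V(\mathfrak B)}\pi_1(\mathfrak Y,\dagger,\lambda(z))\otimes_{G_{\lambda(z)}}B_z\otimes_{G_{\rho(z)}}\pi_1(\mathfrak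 X,\rho(z),* )$ modulo $q\otimes b^-\otimes p=q\lambda(z)\otimes b^+\otimes\overline{\rho(z)}p$ for edges $z\in\mathfrak B$ ($\lambda(z),\overline{\rho(z)}$ groupoid morphisms, trivial if vertices); it is a $\pi_1(\mathfrak Y,\dagger)$-$\pi_1(\mathfrak X,* )$-biset. Product: for a $\mathfrak Y$-$\mathfrak X$ graph of bisets $\mathfrak B$ and an $\mathfrak X$-$\mathfrak W$ graph of bisets $\mathfrak C$, $\mathfrak B\otimes_{\mathfrak X}\mathfrak C$ has underlying graph $\{(b,c)\in\mathfrak B\times\mathfrak C\mid\rho(b)=\lambda(c)\}$ with $(b,c)^-=(b^-,c^-)$, $\overline{(b,c)}=(\bar b,\bar c)$, $\lambda(b,c)=\lambda(b)$, $\rho(b,c)=\rho(c)$, and biset $B_b\otimes_{G_{\rho(b)}}C_c$ at $(b,c)$. Left-fibrant: $\rho$ simplicial and for every vertex $v\in\mathfrak B$ and edge $f\in\mathfrak X$ with $f^-=\rho(v)$, the map $\bigsqcup_{e\in\rho^{-1}(f),\,e^-=v}G_{\lambda(v)}\otimes_{G_{\lambda(e)}}B_e\to B_v$, $g\otimes b\mapsto gb^-$, is an isomorphism of $G_{\lambda(v)}$-$G_f$-bisets. *)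

(* Defs.v *)
(* Quotients are represented as setoids: a type of representatives with an
   equivalence relation generated by the defining relations. *)
From Stdlib Require Import List Relations ProofIrrelevance.
Import ListNotations.

Set Implicit Arguments.
Unset Strict Implicit.

Record group := Group {
  gcar :> Type;
  gmul : gcar -> gcar -> gcar;
  gone : gcar;
  ginv : gcar -> gcar;
  gmulA : forall x y z, gmul x (gmul y z) = gmul (gmul x y) z;
  gmul1 : forall x, gmul gone x = x;
  gmulV : forall x, gmul (ginv x) x = gone }.
Arguments gmul {g}. Arguments gone {g}. Arguments ginv {g}.

Definition is_hom (G H : group) (f : G -> H) : Prop :=
  forall x y, f (gmul x y) = gmul (f x) (f y).

Definition tr (A : Type) (F : A -> Type) (x y : A) (e : x = y) (a : F x) : F y :=
  eq_rect x F a y e.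
Arguments tr {A} F {x y} e a.

(* Graphs: a set with x |-> x^- and x |-> bar x;
   vertices are the fixed points, x^- is a vertex, bar is an involution,
   x = x^- <-> x = bar x.                                              *)
Record graph := Graph {
  gpt :> Type;
  gm : gpt -> gpt;
  gb : gpt -> gpt;
  gbK : forall x, gb (gb x) = x;
  gmV : forall x, gm (gm x) = gm x;
  gm_gb : forall x, gm x = x <-> gb x = x }.
Arguments gm {g}. Arguments gb {g}.

Definition gp (X : graph) (x : X) : X := gm (gb x).

Definition connected (X : graph) : Prop :=
  forall x y : X, clos_refl_sym_trans X (fun a b => b = gm a \/ b = gb a) x y.

Record gmorph (X Y : graph) := GMorph {
  gmap :> X -> Y;
  gmap_m : forall x, gmap (gm x) = gm (gmap x);
  gmap_b : forall x, gmap (gb x) = gb (gmap x) }.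

Definition simplicial (X Y : graph) (f : gmorph X Y) : Prop :=
  forall x : X, gm x <> x -> gm (f x) <> f x.

Record gog := GoG {
  gog_graph :> graph;
  Gr : gog_graph -> group;
  resm : forall x, Gr x -> Gr (gm x);
  resb : forall x, Gr x -> Gr (gb x) }.

Definition GrT (X : gog) (x : X) : Type := gcar (Gr x).

Definition gog_valid (X : gog) : Prop :=
  connected X /\
  (forall x, is_hom (@resm X x)) /\
  (forall x, is_hom (@resb X x)) /\
  (forall x (g : Gr x), tr (@GrT X) (gbK x) (resb (resb g)) = g) /\
  (forall v (e : gm v = v) (g : Gr v), tr (@GrT X) e (resm g) = g) /\
  (forall v (e : gb v = v) (g : Gr v), tr (@GrT X) e (resb g) = g).

(* Fundamental groupoid: words in the generators, typed, modulo the
   congruence generated by the defining relations.                    *)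
Inductive letter (X : gog) : Type :=
| LX (x : X)                 (* the generator x, from x^- to x^+ *)
| LG (v : X) (g : Gr v).
Arguments LX {X}. Arguments LG {X}.

Fixpoint wpath (X : gog) (v w : X) (s : list (letter X)) : Prop :=
  match s with
  | [] => v = w
  | LX x :: s' => gm x = v /\ wpath (gp x) w s'
  | LG u _ :: s' => gm u = u /\ u = v /\ wpath u w s'
  end.

Inductive prel (X : gog) : list (letter X) -> list (letter X) -> Prop :=
| pr_mul (v : X) (g h : Gr v) : prel [LG v g; LG v h] [LG v (gmul g h)]
| pr_one (v : X) : prel [LG v gone] []
| pr_vert (v : X) : gm v = v -> prel [LX v] []
| pr_inv (x : X) : prel [LX x; LX (gb x)] []
| pr_conj (x : X) (g : Gr x) :
    prel [LG (gm x) (resm g); LX x] [LX x; LG (gm (gb x)) (resm (resb g))].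

Definition wstep (X : gog) (s t : list (letter X)) : Prop :=
  exists l r a b, prel a b /\ s = l ++ a ++ r /\ t = l ++ b ++ r.

(* equality of morphisms in pi_1(X, v, w) *)
Definition weq (X : gog) (v w : X) : relation (list (letter X)) :=
  clos_refl_sym_trans _ (fun s t => wpath v w s /\ wpath v w t /\ wstep s t).

Definition linv (X : gog) (a : letter X) : letter X :=
  match a with LX x => LX (gb x) | LG v g => LG v (ginv g) end.
Definition winv (X : gog) (s : list (letter X)) : list (letter X) :=
  rev (map (@linv X) s).

(* Bisets (as setoids; the graphs of bisets in the theorem are required
   to have Leibniz equality, see leibniz_gob)                          *)
Record biset (G H : group) := Biset {
  bcar :> Type;
  beq : bcar -> bcar -> Prop;
  lact : G -> bcar -> bcar;
  ract : bcar -> H -> bcar }.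
Arguments beq {G H b}. Arguments lact {G H b}. Arguments ract {G H b}.

Definition biset_valid (G H : group) (B : biset G H) : Prop :=
  equivalence _ (@beq _ _ B) /\
  (forall g (x y : B), beq x y -> beq (lact g x) (lact g y)) /\
  (forall h (x y : B), beq x y -> beq (ract x h) (ract y h)) /\
  (forall x : B, beq (lact gone x) x) /\
  (forall g g' (x : B), beq (lact g (lact g' x)) (lact (gmul g g') x)) /\
  (forall x : B, beq (ract x gone) x) /\
  (forall h h' (x : B), beq (ract (ract x h) h') (ract x (gmul h h'))) /\
  (forall g h (x : B), beq (lact g (ract x h)) (ract (lact g x) h)).

(* B (x)_H C, where the right group H of B is identified with the left
   group H' of C through phi (a transport along an equality) *)
Definition tensor_rel (G H H' K : group) (B : biset G H) (C : biset H' K)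
  (phi : H -> H') (x y : B * C) : Prop :=
  (beq (fst x) (fst y) /\ snd x = snd y) \/
  (fst x = fst y /\ beq (snd x) (snd y)) \/
  (exists b h c, x = (ract b h, c) /\ y = (b, lact (phi h) c)).

Definition tensor (G H H' K : group) (B : biset G H) (C : biset H' K)
  (phi : H -> H') : biset G K :=
  @Biset G K (B * C) (clos_refl_sym_trans _ (tensor_rel phi))
    (fun g x => (lact g (fst x), snd x)) (fun x k => (fst x, ract (snd x) k)).

Record gob (Y X : gog) := GoB {
  gob_graph :> graph;
  lam : gmorph gob_graph Y;
  rho : gmorph gob_graph X;
  Bs : forall z : gob_graph, biset (Gr (lam z)) (Gr (rho z));
  bm : forall z, Bs z -> Bs (gm z);
  bb : forall z, Bs z -> Bs (gb z) }.
Arguments lam {Y X g}. Arguments rho {Y X g}. Arguments Bs {Y X g}.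
Arguments bm {Y X g z}. Arguments bb {Y X g z}.

Definition BsT (Y X : gog) (B : gob Y X) (z : B) : Type := bcar (Bs z).

Definition gob_valid (Y X : gog) (B : gob Y X) : Prop :=
  (forall z : B, biset_valid (Bs z)) /\
  (forall (z : B) (x y : Bs z), beq x y -> beq (bm x) (bm y)) /\
  (forall (z : B) (x y : Bs z), beq x y -> beq (bb x) (bb y)) /\
  (forall (z : B) g (x : Bs z) h,
     beq (bm (lact g (ract x h)))
         (lact (tr (@GrT Y) (eq_sym (gmap_m lam z)) (resm g))
               (ract (bm x) (tr (@GrT X) (eq_sym (gmap_m rho z)) (resm h))))) /\
  (forall (z : B) g (x : Bs z) h,
     beq (bb (lact g (ract x h)))
         (lact (tr (@GrT Y) (eq_sym (gmap_b lam z)) (resb g))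
               (ract (bb x) (tr (@GrT X) (eq_sym (gmap_b rho z)) (resb h))))) /\
  (forall (z : B) (x : Bs z), beq (tr (@BsT Y X B) (gbK z) (bb (bb x))) x) /\
  (forall (z : B) (e : gm z = z) (x : Bs z), beq (tr (@BsT Y X B) e (bm x)) x) /\
  (forall (z : B) (e : gb z = z) (x : Bs z), beq (tr (@BsT Y X B) e (bb x)) x).

Definition leibniz_gob (Y X : gog) (B : gob Y X) : Prop :=
  forall (z : B) (x y : Bs z), beq x y <-> x = y.

(* Fundamental biset pi_1(B, dag, star)                               *)
Record fbrep (Y X : gog) (B : gob Y X) := FBRep {
  rz : B;
  rq : list (letter Y);
  rb : Bs rz;
  rp : list (letter X) }.
Arguments FBRep {Y X B}.

Definition fb_typ (Y X : gog) (B : gob Y X) (dag : Y) (star : X)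
  (r : fbrep B) : Prop :=
  gm (rz r) = rz r /\ wpath dag (lam (rz r)) (rq r) /\ wpath (rho (rz r)) star (rp r).

Inductive fb_rel (Y X : gog) (B : gob Y X) (dag : Y) (star : X) :
    fbrep B -> fbrep B -> Prop :=
| fbr_q (z : B) q q' (b : Bs z) p :
    weq dag (lam z) q q' -> fb_rel dag star (FBRep z q b p) (FBRep z q' b p)
| fbr_p (z : B) q (b : Bs z) p p' :
    weq (rho z) star p p' -> fb_rel dag star (FBRep z q b p) (FBRep z q b p')
| fbr_b (z : B) q (b b' : Bs z) p :
    beq b b' -> fb_rel dag star (FBRep z q b p) (FBRep z q b' p)
| fbr_l (z : B) q g (b : Bs z) p :
    fb_rel dag star (FBRep z (q ++ [LG (lam z) g]) b p) (FBRep z q (lact g b) p)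
| fbr_r (z : B) q (b : Bs z) h p :
    fb_rel dag star (FBRep z q (ract b h) p) (FBRep z q b (LG (rho z) h :: p))
| fbr_e (z : B) q (b : Bs z) p :
    gm z <> z ->
    fb_rel dag star (FBRep (gm z) q (bm b) p)
      (FBRep (gm (gb z)) (q ++ [LX (lam z)]) (bm (bb b)) (LX (gb (rho z)) :: p)).

Definition fbeq (Y X : gog) (B : gob Y X) (dag : Y) (star : X) : relation (fbrep B) :=
  clos_refl_sym_trans _
    (fun r s => fb_typ dag star r /\ fb_typ dag star s /\ fb_rel dag star r s).

Definition fb_lact (Y X : gog) (B : gob Y X) (q : list (letter Y)) (r : fbrep B) :=
  FBRep (rz r) (q ++ rq r) (rb r) (rp r).
Definition fb_ract (Y X : gog) (B : gob Y X) (r : fbrep B) (p : list (letter X)) :=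
  FBRep (rz r) (rq r) (rb r) (rp r ++ p).

(* pi_1(B, dag, star) (x)_{pi_1(X, star)} pi_1(C, star, ddag)          *)
Section FTensor.
Variables (Y X W : gog) (B : gob Y X) (C : gob X W) (dag : Y) (star : X) (ddag : W).

Definition ft_typ (t : fbrep B * fbrep C) : Prop :=
  fb_typ dag star (fst t) /\ fb_typ star ddag (snd t).

Inductive ft_rel : fbrep B * fbrep C -> fbrep B * fbrep C -> Prop :=
| ftr_1 r r' s : fbeq dag star r r' -> ft_rel (r, s) (r', s)
| ftr_2 r s s' : fbeq star ddag s s' -> ft_rel (r, s) (r, s')
| ftr_m r s p : wpath star star p -> ft_rel (fb_ract r p, s) (r, fb_lact p s).

Definition fteq : relation (fbrep B * fbrep C) :=
  clos_refl_sym_trans _ (fun t u => ft_typ t /\ ft_typ u /\ ft_rel t u).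
End FTensor.

Lemma sig_eq (A : Type) (P : A -> Prop) (x y : sig P) :
  proj1_sig x = proj1_sig y -> x = y.
Proof.
  destruct x as [x hx], y as [y hy]; simpl; intros ->.
  f_equal; apply proof_irrelevance.
Qed.

Section Product.
Variables (Y X W : gog) (B : gob Y X) (C : gob X W).

Definition pcar : Type := { bc : B * C | rho (fst bc) = lam (snd bc) }.

Definition pgm (p : pcar) : pcar :=
  let b := fst (proj1_sig p) in let c := snd (proj1_sig p) in
  exist _ (gm b, gm c)
    (eq_trans (gmap_m rho b)
       (eq_trans (f_equal gm (proj2_sig p)) (eq_sym (gmap_m lam c)))).

Definition pgb (p : pcar) : pcar :=
  let b := fst (proj1_sig p) in let c := snd (proj1_sig p) in
  exist _ (gb b, gb c)
    (eq_trans (gmap_b rho b)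
       (eq_trans (f_equal gb (proj2_sig p)) (eq_sym (gmap_b lam c)))).

Lemma pgbK (p : pcar) : pgb (pgb p) = p.
Proof.
  apply sig_eq; destruct p as [[b c] h]; simpl; rewrite !gbK; reflexivity.
Qed.

Lemma pgmV (p : pcar) : pgm (pgm p) = pgm p.
Proof.
  apply sig_eq; destruct p as [[b c] h]; simpl; rewrite !gmV; reflexivity.
Qed.

Lemma pgm_gb (p : pcar) : pgm p = p <-> pgb p = p.
Proof.
  destruct p as [[b c] h]; split; intro H;
    apply (f_equal (@proj1_sig _ _)) in H; simpl in H; injection H as H1 H2;
    apply sig_eq; simpl.
  - apply gm_gb in H1; apply gm_gb in H2; rewrite H1, H2; reflexivity.
  - apply gm_gb in H1; apply gm_gb in H2; rewrite H1, H2; reflexivity.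
Qed.

Definition pgraph : graph := @Graph pcar pgm pgb pgbK pgmV pgm_gb.

Definition plam : gmorph pgraph Y :=
  @GMorph pgraph Y (fun p : pcar => lam (fst (proj1_sig p)))
    (fun p => gmap_m lam (fst (proj1_sig p)))
    (fun p => gmap_b lam (fst (proj1_sig p))).

Definition prho : gmorph pgraph W :=
  @GMorph pgraph W (fun p : pcar => rho (snd (proj1_sig p)))
    (fun p => gmap_m rho (snd (proj1_sig p)))
    (fun p => gmap_b rho (snd (proj1_sig p))).

Definition pBs (p : pgraph) : biset (Gr (plam p)) (Gr (prho p)) :=
  tensor (Bs (fst (proj1_sig p))) (Bs (snd (proj1_sig p)))
    (tr (@GrT X) (proj2_sig p)).

Definition pbm (p : pgraph) (x : pBs p) : pBs (gm p) :=
  (bm (fst x), bm (snd x)).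
Definition pbb (p : pgraph) (x : pBs p) : pBs (gb p) :=
  (bb (fst x), bb (snd x)).

Definition gob_prod : gob Y W := @GoB Y W pgraph plam prho pBs pbm pbb.
End Product.

Definition pvert (Y X W : gog) (B : gob Y X) (C : gob X W) (v : B) (w : C)
  (h : rho v = lam w) : gob_prod B C := exist _ (v, w) h.

Definition prep (Y X W : gog) (B : gob Y X) (C : gob X W) (v : B) (w : C)
  (h : rho v = lam w) (q : list (letter Y)) (b : Bs v) (c : Bs w)
  (r : list (letter W)) : fbrep (gob_prod B C) :=
  @FBRep Y W (gob_prod B C) (pvert h) q (b, c) r.

Section Fibrant.
Variables (Y X : gog) (B : gob Y X).

(* elements g (x) b of  G_{lam v} (x)_{G_{lam e}} B_e, e in rho^-1(f), e^- = v *)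
Record fibel (v : B) (f : X) := FibEl {
  fe : B; fe_rho : rho fe = f; fe_src : gm fe = v;
  fg : Gr (lam v); fb : Bs fe }.
Arguments FibEl {v f}.

Definition fib_phi (v : B) (e : B) (hs : gm e = v) (h : Gr (lam e)) : Gr (lam v) :=
  tr (@GrT Y) (eq_trans (eq_sym (gmap_m lam e)) (f_equal lam hs)) (resm h).

Inductive fib_rel (v : B) (f : X) : fibel v f -> fibel v f -> Prop :=
| fibr_t e hr hs g h (b : Bs e) :
    fib_rel (FibEl e hr hs (gmul g (fib_phi hs h)) b) (FibEl e hr hs g (lact h b))
| fibr_b e hr hs g (b b' : Bs e) :
    beq b b' -> fib_rel (FibEl e hr hs g b) (FibEl e hr hs g b').

Definition fibmap (v : B) (f : X) (x : fibel v f) : Bs v :=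
  lact (fg x) (tr (@BsT Y X B) (fe_src x) (bm (fb x))).

Definition fib_lact (v : B) (f : X) (g : Gr (lam v)) (x : fibel v f) : fibel v f :=
  FibEl (fe x) (fe_rho x) (fe_src x) (gmul g (fg x)) (fb x).
Definition fib_ract (v : B) (f : X) (x : fibel v f) (h : Gr f) : fibel v f :=
  FibEl (fe x) (fe_rho x) (fe_src x) (fg x)
    (ract (fb x) (tr (@GrT X) (eq_sym (fe_rho x)) h)).

Definition left_fibrant : Prop :=
  simplicial (@rho Y X B) /\
  forall (v : B) (hv : gm v = v) (f : X) (hfv : gm f = rho v) (hfe : gm f <> f),
    (forall (g : Gr (lam v)) (x : fibel v f), beq (fibmap (fib_lact g x)) (lact g (fibmap x))) /\
    (forall x h, beq (fibmap (fib_ract x h))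
                     (ract (fibmap x) (tr (@GrT X) hfv (resm h)))) /\
    (forall x y : fibel v f, beq (fibmap x) (fibmap y) ->
        clos_refl_sym_trans _ (@fib_rel v f) x y) /\
    (forall y : Bs v, exists x : fibel v f, beq (fibmap x) y).
End Fibrant.

(* Main.v *)
Require Import Defs.
From Stdlib Require Import List Relations ProofIrrelevance ClassicalEpsilon.
Import ListNotations.
Set Implicit Arguments.
Unset Strict Implicit.


Lemma tr_irr (A : Type) (F : A -> Type) (x y : A) (e1 e2 : x = y) (a : F x) :
  tr F e1 a = tr F e2 a.
Proof. rewrite (proof_irrelevance _ e1 e2); reflexivity. Qed.

Lemma tr_id (A : Type) (F : A -> Type) (x : A) (e : x = x) (a : F x) : tr F e a = a.
Proof. rewrite (proof_irrelevance _ e eq_refl); reflexivity. Qed.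

Lemma tr_trans (A : Type) (F : A -> Type) (x y z : A) (e1 : x = y) (e2 : y = z) (a : F x) :
  tr F e2 (tr F e1 a) = tr F (eq_trans e1 e2) a.
Proof. destruct e1, e2; reflexivity. Qed.

Lemma tr_comp (A A' : Type) (f : A -> A') (G : A' -> Type) (x y : A) (e : x = y) (a : G (f x)) :
  tr (fun z => G (f z)) e a = tr G (f_equal f e) a.
Proof. destruct e; reflexivity. Qed.

Lemma tr_fun (A A' : Type) (f : A -> A') (F : A -> Type) (G : A' -> Type)
  (h : forall x, F x -> G (f x)) (x y : A) (e : x = y) (a : F x) :
  h y (tr F e a) = tr G (f_equal f e) (h x a).
Proof. destruct e; reflexivity. Qed.

Lemma tr_sym (A : Type) (F : A -> Type) (x y : A) (e : x = y) (a : F x) (b : F y) :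
  tr F e a = b -> a = tr F (eq_sym e) b.
Proof. destruct e; simpl; auto. Qed.

Definition dec_eq (A : Type) (a b : A) : {a = b} + {a <> b} :=
  excluded_middle_informative (a = b).

Lemma dec_eq_refl (A : Type) (P : Type) (a : A) (f : a = a -> P) (g : a <> a -> P) :
  match dec_eq a a with left e => f e | right n => g n end = f eq_refl.
Proof.
  destruct (dec_eq a a) as [e|n]; [rewrite (proof_irrelevance _ e eq_refl); reflexivity|].
  exfalso; apply n; reflexivity.
Qed.

Section Groups.
Variable G : group.
Lemma gmulV_r (g : G) : gmul g (ginv g) = gone.
Proof.
  rewrite <- (gmul1 (gmul g (ginv g))).
  rewrite <- (gmulV (ginv g)) at 1.
  rewrite <- gmulA. rewrite (gmulA (ginv g) g (ginv g)). rewrite gmulV, gmul1.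
  apply gmulV.
Qed.
Lemma gmul1_r (g : G) : gmul g gone = g.
Proof. rewrite <- (gmulV g), gmulA, gmulV_r, gmul1; reflexivity. Qed.
Lemma ginv_ginv (g : G) : ginv (ginv g) = g.
Proof.
  rewrite <- (gmul1_r (ginv (ginv g))), <- (gmulV g), gmulA, gmulV, gmul1; reflexivity.
Qed.
Lemma gcancel_l (a b c : G) : gmul a b = gmul a c -> b = c.
Proof.
  intro H. rewrite <- (gmul1 b), <- (gmul1 c), <- (gmulV a), <- !gmulA, H; reflexivity.
Qed.
End Groups.

Lemma hom_one (G H : group) (f : G -> H) : is_hom f -> f gone = gone.
Proof.
  intro hf. apply (gcancel_l (a := f gone)). rewrite <- hf, gmul1, gmul1_r; reflexivity.
Qed.

Lemma tr_gmul (A : Type) (F : A -> group) (x y : A) (e : x = y) (a b : F x) :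
  tr (fun z => gcar (F z)) e (gmul a b) =
  gmul (tr (fun z => gcar (F z)) e a) (tr (fun z => gcar (F z)) e b).
Proof. destruct e; reflexivity. Qed.
Lemma tr_gone (A : Type) (F : A -> group) (x y : A) (e : x = y) :
  tr (fun z => gcar (F z)) e gone = gone.
Proof. destruct e; reflexivity. Qed.

Lemma crst_typed (A : Type) (R : relation A) (P : A -> Prop) x y :
  (forall a b, R a b -> P a /\ P b) -> clos_refl_sym_trans A R x y ->
  x = y \/ (P x /\ P y).
Proof.
  intros HR H; induction H as [a b Hab| a | a b _ IH | a b c _ IH1 _ IH2].
  - right; apply HR; auto.
  - left; auto.
  - destruct IH as [->|[]]; auto.
  - destruct IH1 as [->|[]], IH2 as [->|[]]; auto.
Qed.

Lemma crst_step (A : Type) (R : relation A) x y : R x y -> clos_refl_sym_trans A R x y.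
Proof. apply rst_step. Qed.
Lemma crst_sym (A : Type) (R : relation A) x y :
  clos_refl_sym_trans A R x y -> clos_refl_sym_trans A R y x.
Proof. apply rst_sym. Qed.
Lemma crst_trans (A : Type) (R : relation A) x y z :
  clos_refl_sym_trans A R x y -> clos_refl_sym_trans A R y z -> clos_refl_sym_trans A R x z.
Proof. apply rst_trans. Qed.
Lemma crst_refl' (A : Type) (R : relation A) x y : x = y -> clos_refl_sym_trans A R x y.
Proof. intros ->; apply rst_refl. Qed.

Section Words.
Variable X : gog.
Hypothesis hX : gog_valid X.

Lemma resm_hom (x : X) : is_hom (@resm X x).
Proof. apply hX. Qed.
Lemma resb_hom (x : X) : is_hom (@resb X x).
Proof. apply hX. Qed.

Lemma gp_vert (v : X) : gm v = v -> gp v = v.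
Proof. intro h. unfold gp. assert (gb v = v) by (apply gm_gb; auto). rewrite H; auto. Qed.
Lemma gb_vert (v : X) : gm v = v -> gb v = v.
Proof. intro h; apply gm_gb; auto. Qed.
Lemma gp_gb (x : X) : gp (gb x) = gm x.
Proof. unfold gp; rewrite gbK; reflexivity. Qed.
Lemma gm_gp (x : X) : gm (gp x) = gp x.
Proof. unfold gp; apply gmV. Qed.

Lemma wpath_app (v u w : X) l r : wpath v u l -> wpath u w r -> wpath v w (l ++ r).
Proof.
  revert v; induction l as [|a l IH]; intros v Hl Hr; simpl in *.
  - subst; auto.
  - destruct a; destruct Hl as [H1 H2]; [split; auto|].
    destruct H2; split; auto.
Qed.

Lemma wpath_app_inv (v w : X) l r : wpath v w (l ++ r) -> exists u, wpath v u l /\ wpath u w r.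
Proof.
  revert v; induction l as [|a l IH]; intros v H; simpl in *.
  - exists v; auto.
  - destruct a; destruct H as [H1 H2].
    + destruct (IH _ H2) as [u []]; exists u; auto.
    + destruct H2 as [H2 H3]; destruct (IH _ H3) as [u []]; exists u; auto.
Qed.

Lemma wpath_src (a a' w : X) r : wpath a w r -> wpath a' w r -> a = a'.
Proof.
  destruct r as [|l r]; simpl.
  - intros; subst; auto.
  - destruct l; intros [] []; subst; auto. destruct H0, H2; subst; auto.
Qed.

Lemma wpath_tgt (a w w' : X) r : wpath a w r -> wpath a w' r -> w = w'.
Proof.
  revert a; induction r as [|l r IH]; simpl; intros a.
  - intros; subst; auto.
  - destruct l; intros [] []; eauto. destruct H0, H2; eauto.
Qed.

Lemma wpath_cons_LX (v w : X) x r : wpath v w (LX x :: r) <-> gm x = v /\ wpath (gp x) w r.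
Proof. simpl; tauto. Qed.

Lemma linv_linv (a : letter X) : linv (linv a) = a.
Proof. destruct a; simpl; [rewrite gbK | rewrite ginv_ginv]; reflexivity. Qed.

Lemma winv_app (l r : list (letter X)) : winv (l ++ r) = winv r ++ winv l.
Proof. unfold winv; rewrite map_app, rev_app_distr; reflexivity. Qed.

Lemma winv_cons (a : letter X) l : winv (a :: l) = winv l ++ [linv a].
Proof. reflexivity. Qed.

Lemma winv_winv (l : list (letter X)) : winv (winv l) = l.
Proof.
  unfold winv; rewrite map_rev, rev_involutive, map_map.
  induction l; simpl; auto. rewrite linv_linv, IHl; auto.
Qed.

Lemma wpath_winv (v w : X) l : wpath v w l -> wpath w v (winv l).
Proof.
  revert v; induction l as [|a l IH]; intros v H; simpl in *.
  - subst; reflexivity.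
  - rewrite winv_cons. destruct a as [x|u g]; destruct H as [H1 H2].
    + apply wpath_app with (gp x); auto. simpl. split; [reflexivity|].
      rewrite gp_gb; auto.
    + destruct H2 as [H2 H3]; subst u. apply wpath_app with v; auto. simpl; auto.
Qed.

Lemma weq_ctx (v u u' w : X) l s t r :
  weq u u' s t -> wpath v u l -> wpath u' w r -> weq v w (l ++ s ++ r) (l ++ t ++ r).
Proof.
  intros H Hl Hr; induction H as [s t [Hs [Ht [l0 [r0 [a [b [Hp [E1 E2]]]]]]]] | | |].
  - apply rst_step; split; [|split].
    + apply wpath_app with u; auto; apply wpath_app with u'; auto.
    + apply wpath_app with u; auto; apply wpath_app with u'; auto.
    + exists (l ++ l0), (r0 ++ r), a, b; split; auto; subst; split; rewrite <- !app_assoc; reflexivity.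
  - apply rst_refl.
  - apply rst_sym; auto.
  - eapply rst_trans; eauto.
Qed.

Lemma weq_app_l (v u w : X) l s t : weq u w s t -> wpath v u l -> weq v w (l ++ s) (l ++ t).
Proof.
  intros H Hl. pose proof (weq_ctx (r := []) H Hl (eq_refl w)) as H0.
  rewrite !app_nil_r in H0; exact H0.
Qed.

Lemma weq_app_r (v u w : X) s t r : weq v u s t -> wpath u w r -> weq v w (s ++ r) (t ++ r).
Proof.
  intros H Hr. change (s ++ r) with ([] ++ s ++ r). change (t ++ r) with ([] ++ t ++ r).
  eapply weq_ctx; eauto. reflexivity.
Qed.

Lemma weq_typ (v w : X) s t : weq v w s t -> (wpath v w s <-> wpath v w t).
Proof.
  intro H; induction H as [s t [Hs [Ht _]]| | |]; tauto.
Qed.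

Lemma weq_prel (v w : X) a b : prel a b -> wpath v w a -> wpath v w b -> weq v w a b.
Proof.
  intros Hp Ha Hb. apply rst_step; split; [|split]; auto.
  exists [], [], a, b; simpl; rewrite !app_nil_r; auto.
Qed.

Lemma weq_inv_r (v w : X) p : wpath v w p -> weq v v (p ++ winv p) [].
Proof.
  revert v; induction p as [|a p IH]; intros v H.
  - apply rst_refl.
  - rewrite winv_cons. destruct a as [x|u g]; destruct H as [H1 H2].
    + specialize (IH _ H2).
      eapply rst_trans.
      * replace ((LX x :: p) ++ winv p ++ [linv (LX x)]) with ([LX x] ++ (p ++ winv p) ++ [LX (gb x)])
          by (simpl; rewrite <- app_assoc; reflexivity).
        apply weq_ctx with (u := gp x) (u' := gp x); eauto.
        -- simpl; auto.
        -- simpl; split; [reflexivity|]. rewrite gp_gb; auto.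
      * simpl. apply weq_prel; [constructor| |reflexivity].
        simpl; split; auto; split; [reflexivity|]. rewrite gp_gb; auto.
    + destruct H2 as [H2 H3]; subst. specialize (IH _ H3).
      eapply rst_trans.
      * replace ((LG v g :: p) ++ winv p ++ [linv (LG v g)]) with ([LG v g] ++ (p ++ winv p) ++ [LG v (ginv g)])
          by (simpl; rewrite <- app_assoc; reflexivity).
        apply weq_ctx with (u := v) (u' := v); eauto; simpl; auto.
      * simpl. eapply rst_trans.
        -- apply weq_prel with (b := [LG v (gmul g (ginv g))]); [constructor| |]; simpl; auto.
        -- rewrite gmulV_r. apply weq_prel; [constructor| |]; simpl; auto.
Qed.

Lemma weq_inv_l (v w : X) p : wpath v w p -> weq w w (winv p ++ p) [].
Proof.
  intro H. rewrite <- (winv_winv p) at 2. apply weq_inv_r with v. apply wpath_winv; auto.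
Qed.

Lemma LG_tr (u u' : X) (e : u = u') (g : Gr u) : LG u g = LG u' (tr (@GrT X) e g).
Proof. destruct e; reflexivity. Qed.

Lemma LX_vert_weq (v w : X) l x r :
  gm x = x -> wpath v w (l ++ LX x :: r) -> weq v w (l ++ LX x :: r) (l ++ r).
Proof.
  intros hx H. destruct (wpath_app_inv H) as [u [H1 H2]].
  destruct H2 as [H2 H3]. rewrite gp_vert in H3 by auto. subst.
  change (LX x :: r) with ([LX x] ++ r). change (l ++ r) with (l ++ [] ++ r).
  apply weq_ctx with (u := gm x) (u' := gm x); auto.
  apply weq_prel; [constructor; auto| |reflexivity]. simpl; split; auto. rewrite gp_vert; auto.
  rewrite hx; auto.
Qed.

Lemma conn_path (x y : X) : exists p, wpath (gm x) (gm y) p.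
Proof.
  destruct hX as [hc _]. specialize (hc x y).
  induction hc as [a b [->| ->]| a | a b _ [p Hp] | a b c _ [p1 H1] _ [p2 H2]].
  - exists []; simpl; rewrite gmV; auto.
  - exists [LX a]; simpl; auto.
  - exists []; reflexivity.
  - exists (winv p); apply wpath_winv; auto.
  - exists (p1 ++ p2); eapply wpath_app; eauto.
Qed.
End Words.

Lemma trT_gone (X : gog) (x y : X) (e : x = y) : tr (@GrT X) e gone = gone.
Proof. destruct e; reflexivity. Qed.
Lemma trT_gmul (X : gog) (x y : X) (e : x = y) (a b : Gr x) :
  tr (@GrT X) e (gmul a b) = gmul (tr (@GrT X) e a) (tr (@GrT X) e b).
Proof. destruct e; reflexivity. Qed.
Lemma trT_ginv (X : gog) (x y : X) (e : x = y) (a : Gr x) :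
  tr (@GrT X) e (ginv a) = ginv (tr (@GrT X) e a).
Proof. destruct e; reflexivity. Qed.
Lemma resm_trT (X : gog) (x y : X) (e : x = y) (g : Gr x) :
  resm (tr (@GrT X) e g) = tr (@GrT X) (f_equal gm e) (resm g).
Proof. destruct e; reflexivity. Qed.
Lemma resb_trT (X : gog) (x y : X) (e : x = y) (g : Gr x) :
  resb (tr (@GrT X) e g) = tr (@GrT X) (f_equal gb e) (resb g).
Proof. destruct e; reflexivity. Qed.


Section Prel.
Variable X : gog.
Hypothesis hX : gog_valid X.

Lemma prel_typ (u w : X) a b : prel a b -> wpath u w a -> wpath u w b.
Proof.
  intros Hp; destruct Hp; simpl.
  - intros [h1 [h2 [h3 [h4 h5]]]]; subst; auto.
  - intros [h1 [h2 h3]]; subst; auto.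
  - intros [h1 h2]. rewrite gp_vert in h2 by auto. subst; auto.
  - intros [h1 [h2 h3]]. rewrite gp_gb in h3. subst; auto.
  - intros [h1 [h2 [h3 h4]]]. subst. repeat split; auto; apply gmV.
Qed.

Lemma weq_fwd (v w : X) l a b r :
  prel a b -> wpath v w (l ++ a ++ r) -> weq v w (l ++ a ++ r) (l ++ b ++ r).
Proof.
  intros Hp H. destruct (wpath_app_inv H) as [u1 [H1 H2]].
  destruct (wpath_app_inv H2) as [u2 [H3 H4]].
  apply weq_ctx with u1 u2; auto.
  apply weq_prel; auto. eapply prel_typ; eauto.
Qed.

Lemma weq_fwd' (v w : X) l a b r s t :
  prel a b -> wpath v w (l ++ a ++ r) -> s = l ++ a ++ r -> t = l ++ b ++ r -> weq v w s t.
Proof. intros; subst; apply weq_fwd; auto. Qed.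

Lemma weq_refl' (v w : X) (s t : list (letter X)) : s = t -> weq v w s t.
Proof. intros ->; apply rst_refl. Qed.
End Prel.

Section GobLemmas.
Variables (Y X : gog) (B : gob Y X).
Hypotheses (hY : gog_valid Y) (hX : gog_valid X) (hB : gob_valid B) (hBl : leibniz_gob B).

Lemma L (z : B) (x y : Bs z) : beq x y -> x = y.
Proof. apply hBl. Qed.

Lemma bval (z : B) : biset_valid (Bs z).
Proof. apply hB. Qed.

Lemma lact_ract (z : B) g (x : Bs z) h : lact g (ract x h) = ract (lact g x) h.
Proof. apply L, (bval z). Qed.
Lemma ract_one (z : B) (x : Bs z) : ract x gone = x.
Proof. apply L, (bval z). Qed.
Lemma lact_one (z : B) (x : Bs z) : lact gone x = x.
Proof. apply L, (bval z). Qed.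
Lemma ract_ract (z : B) (x : Bs z) h h' : ract (ract x h) h' = ract x (gmul h h').
Proof. apply L, (bval z). Qed.
Lemma lact_lact (z : B) (x : Bs z) g g' : lact g (lact g' x) = lact (gmul g g') x.
Proof. apply L, (bval z). Qed.

Lemma bm_lr (z : B) g (x : Bs z) h :
  bm (lact g (ract x h)) =
  lact (tr (@GrT Y) (eq_sym (gmap_m lam z)) (resm g))
       (ract (bm x) (tr (@GrT X) (eq_sym (gmap_m rho z)) (resm h))).
Proof. apply L, hB. Qed.
Lemma bb_lr (z : B) g (x : Bs z) h :
  bb (lact g (ract x h)) =
  lact (tr (@GrT Y) (eq_sym (gmap_b lam z)) (resb g))
       (ract (bb x) (tr (@GrT X) (eq_sym (gmap_b rho z)) (resb h))).
Proof. apply L, hB. Qed.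

Lemma bm_lact (z : B) g (x : Bs z) :
  bm (lact g x) = lact (tr (@GrT Y) (eq_sym (gmap_m lam z)) (resm g)) (bm x).
Proof.
  rewrite <- (ract_one x) at 1. rewrite bm_lr, (hom_one (@resm_hom X hX _)), trT_gone, ract_one; auto.
Qed.
Lemma bm_ract (z : B) (x : Bs z) h :
  bm (ract x h) = ract (bm x) (tr (@GrT X) (eq_sym (gmap_m rho z)) (resm h)).
Proof.
  rewrite <- (lact_one (ract x h)). rewrite bm_lr, (hom_one (@resm_hom Y hY _)), trT_gone, lact_one; auto.
Qed.
Lemma bb_lact (z : B) g (x : Bs z) :
  bb (lact g x) = lact (tr (@GrT Y) (eq_sym (gmap_b lam z)) (resb g)) (bb x).
Proof.
  rewrite <- (ract_one x) at 1. rewrite bb_lr, (hom_one (@resb_hom X hX _)), trT_gone, ract_one; auto.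
Qed.
Lemma bb_ract (z : B) (x : Bs z) h :
  bb (ract x h) = ract (bb x) (tr (@GrT X) (eq_sym (gmap_b rho z)) (resb h)).
Proof.
  rewrite <- (lact_one (ract x h)). rewrite bb_lr, (hom_one (@resb_hom Y hY _)), trT_gone, lact_one; auto.
Qed.

Lemma bbK' (z : B) (x : Bs z) : tr (@BsT Y X B) (gbK z) (bb (bb x)) = x.
Proof. apply L, hB. Qed.
Lemma bm_vert (z : B) (e : gm z = z) (x : Bs z) : tr (@BsT Y X B) e (bm x) = x.
Proof. apply L, hB. Qed.
Lemma bb_vert (z : B) (e : gb z = z) (x : Bs z) : tr (@BsT Y X B) e (bb x) = x.
Proof. apply L, hB. Qed.

Lemma bm_tr (z z' : B) (e : z = z') (x : Bs z) :
  bm (tr (@BsT Y X B) e x) = tr (@BsT Y X B) (f_equal gm e) (bm x).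
Proof. destruct e; reflexivity. Qed.
Lemma bb_tr (z z' : B) (e : z = z') (x : Bs z) :
  bb (tr (@BsT Y X B) e x) = tr (@BsT Y X B) (f_equal gb e) (bb x).
Proof. destruct e; reflexivity. Qed.

Lemma bmbbbb (z : B) (x : Bs z) :
  tr (@BsT Y X B) (f_equal gm (gbK z)) (bm (bb (bb x))) = bm x.
Proof. rewrite <- bm_tr, bbK'; reflexivity. Qed.

Lemma gm_vert_B (v : B) : gm v = v -> gb v = v.
Proof. intro; apply gm_gb; auto. Qed.
End GobLemmas.


Section Push.
Variables (Y X : gog) (B : gob Y X).
Hypotheses (hY : gog_valid Y) (hX : gog_valid X) (hB : gob_valid B) (hBl : leibniz_gob B)
  (hfib : left_fibrant B).
Variable y0 : Y.

Record St := MkSt { sv : B; sq : list (letter Y); sb : Bs sv }.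
Arguments MkSt : clear implicits.

Lemma St_tr (v v' : B) (e : v = v') q (b : Bs v) :
  MkSt v q b = MkSt v' q (tr (@BsT Y X B) e b).
Proof. destruct e; reflexivity. Qed.

Definition dec (v : B) (f : X) (b : Bs v) : option (fibel v f) :=
  match excluded_middle_informative (exists d : fibel v f, fibmap d = b) with
  | left H => Some (proj1_sig (constructive_indefinite_description _ H))
  | right _ => None end.
Arguments dec : clear implicits.

Lemma dec_some (v : B) f b d : dec v f b = Some d -> fibmap d = b.
Proof.
  unfold dec. destruct (excluded_middle_informative _) as [H|H]; [|discriminate].
  intro E; injection E as <-. apply (proj2_sig (constructive_indefinite_description _ H)).
Qed.

Lemma dec_ex (v : B) f b : (exists d : fibel v f, fibmap d = b) -> exists d, dec v f b = Some d.
Proof.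
  unfold dec. destruct (excluded_middle_informative _) as [H|H]; [eauto|tauto].
Qed.

Section Fib.
Variables (v : B) (hv : gm v = v) (f : X) (hfv : gm f = rho v) (hfe : gm f <> f).
Lemma fib_lact_eq g (d : fibel v f) : fibmap (fib_lact g d) = lact g (fibmap d).
Proof. apply L; auto. apply (proj2 hfib v hv f hfv hfe). Qed.
Lemma fib_ract_eq (d : fibel v f) h :
  fibmap (fib_ract d h) = ract (fibmap d) (tr (@GrT X) hfv (resm h)).
Proof. apply L; auto. apply (proj2 hfib v hv f hfv hfe). Qed.
Lemma fib_inj (d d' : fibel v f) :
  fibmap d = fibmap d' -> clos_refl_sym_trans _ (@fib_rel Y X B v f) d d'.
Proof. intro E; apply (proj2 hfib v hv f hfv hfe). rewrite E. apply (equiv_refl _ _ (proj1 (bval hB _))). Qed.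
Lemma fib_surj (b : Bs v) : exists d : fibel v f, dec v f b = Some d.
Proof.
  apply dec_ex. destruct (proj2 (proj2 (proj2 (proj2 hfib v hv f hfv hfe))) b) as [d Hd].
  exists d; apply L; auto.
Qed.
End Fib.

Definition out (q : list (letter Y)) (v : B) (f : X) (d : fibel v f) : St :=
  MkSt (gm (gb (fe d))) (q ++ [LG (lam v) (fg d); LX (lam (fe d))]) (bm (bb (fb d))).

Definition step (s : St) (a : letter X) : St :=
  match a with
  | LG u g => match dec_eq u (rho (sv s)) with
              | left e => MkSt (sv s) (sq s) (ract (sb s) (tr (@GrT X) e g))
              | right _ => s end
  | LX x => match dec_eq (gm x) x with
            | left _ => s
            | right _ => match dec (sv s) x (sb s) with
                         | Some d => out (sq s) d
                         | None => s end end
  end.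

Definition push (s : St) (l : list (letter X)) : St := fold_left step l s.

Lemma push_app s l r : push s (l ++ r) = push (push s l) r.
Proof. unfold push; apply fold_left_app. Qed.

Definition TS (u : X) (s : St) : Prop :=
  gm (sv s) = sv s /\ rho (sv s) = u /\ wpath y0 (lam (sv s)) (sq s).

Inductive Mv : St -> St -> Prop :=
| mv_q (v : B) q q' (b : Bs v) : weq y0 (lam v) q q' -> Mv (MkSt v q b) (MkSt v q' b)
| mv_l (v : B) q g (b : Bs v) : Mv (MkSt v (q ++ [LG (lam v) g]) b) (MkSt v q (lact g b)).

Definition Steq (u : X) : relation St :=
  clos_refl_sym_trans _ (fun s t => TS u s /\ TS u t /\ Mv s t).

Lemma gm_lam_vert (v : B) : gm v = v -> gm (lam v) = lam v.
Proof. intro h; rewrite <- gmap_m, h; auto. Qed.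
Lemma gm_rho_vert (v : B) : gm v = v -> gm (rho v) = rho v.
Proof. intro h; rewrite <- gmap_m, h; auto. Qed.

Lemma Mv_TS u s t : Mv s t -> (TS u s <-> TS u t).
Proof.
  intro H; destruct H as [v q q' b Hq | v q g b]; unfold TS; simpl.
  - pose proof (weq_typ Hq); tauto.
  - split; intros [h1 [h2 h3]]; repeat split; auto.
    + destruct (wpath_app_inv h3) as [w' [H1 H2]]. simpl in H2.
      destruct H2 as [_ [E _]]; rewrite E; auto.
    + apply wpath_app with (lam v); auto. simpl; repeat split; auto. apply gm_lam_vert; auto.
Qed.

Lemma Steq_mv u s t : TS u s -> Mv s t -> Steq u s t.
Proof. intros h m; apply rst_step; pose proof (Mv_TS u m); tauto. Qed.
Lemma Steq_mv' u s t : TS u t -> Mv s t -> Steq u s t.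
Proof. intros h m; apply rst_step; pose proof (Mv_TS u m); tauto. Qed.
Lemma Steq_eq u s t : s = t -> Steq u s t.
Proof. intros ->; apply rst_refl. Qed.
Lemma Steq_sym u s t : Steq u s t -> Steq u t s.
Proof. apply rst_sym. Qed.
Lemma Steq_trans u s t r : Steq u s t -> Steq u t r -> Steq u s r.
Proof. apply rst_trans. Qed.
Lemma Steq_typed u s t : Steq u s t -> s = t \/ (TS u s /\ TS u t).
Proof. apply crst_typed. tauto. Qed.
Lemma Steq_TS u s t : Steq u s t -> TS u s -> TS u t.
Proof. intros H h; destruct (Steq_typed H) as [<-|[]]; auto. Qed.

Lemma out_typ (v : B) (f : X) (d : fibel v f) q :
  gm v = v -> gm f = rho v -> wpath y0 (lam v) q -> TS (gp f) (out q d).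
Proof.
  intros hv hfv hq. destruct d as [e hr hs g b]; unfold out, TS; simpl.
  split; [apply gmV|split].
  - rewrite gmap_m, gmap_b, hr; reflexivity.
  - apply wpath_app with (lam v); auto. simpl. split; [apply gm_lam_vert; auto|].
    split; auto. split.
    + rewrite <- gmap_m, hs; auto.
    + unfold gp. rewrite gmap_m, gmap_b; reflexivity.
Qed.

Lemma wpath_LGLX (v e : B) (hv : gm v = v) (hs : gm e = v) q gs :
  wpath y0 (lam v) q ->
  wpath y0 (lam (gm (gb e))) (q ++ map (LG (lam v)) gs ++ [LX (lam e)]).
Proof.
  intro hq. apply wpath_app with (lam v); auto.
  induction gs as [|g gs IH]; simpl.
  - split; [rewrite <- gmap_m, hs; auto|]. unfold gp; rewrite gmap_m, gmap_b; reflexivity.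
  - split; [apply gm_lam_vert; auto|]. split; auto.
Qed.

Lemma Hprime (e : B) (h : Gr (lam e)) (E2 : gm (gb (lam e)) = lam (gm (gb e))) :
  tr (@GrT Y) (eq_sym (gmap_m lam (gb e))) (resm (tr (@GrT Y) (eq_sym (gmap_b lam e)) (resb h)))
  = tr (@GrT Y) E2 (resm (resb h)).
Proof.
  rewrite resm_trT. rewrite tr_trans. apply tr_irr.
Qed.

Lemma out_rel (v : B) (f : X) q (d d' : fibel v f) :
  gm v = v -> gm f = rho v -> wpath y0 (lam v) q ->
  clos_refl_sym_trans _ (@fib_rel Y X B v f) d d' -> Steq (gp f) (out q d) (out q d').
Proof.
  intros hv hfv hq H. induction H as [d d' Hr| | |].
  - destruct Hr as [e hr hs g h b | e hr hs g b b' Hb].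
    + pose proof (out_typ (FibEl hr hs (gmul g (fib_phi hs h)) b) hv hfv hq) as T1.
      pose proof (out_typ (FibEl hr hs g (lact h b)) hv hfv hq) as T2.
      unfold out in *; cbn [fe fg fb] in *.
      rewrite (bb_lact hX hB hBl), (bm_lact hX hB hBl) in *.
      assert (E2 : gm (gb (lam e)) = lam (gm (gb e))) by (rewrite gmap_m, gmap_b; reflexivity).
      rewrite (Hprime h E2) in *.
      eapply Steq_trans; [|apply Steq_mv'; [exact T2|apply mv_l]].
      apply Steq_mv; [exact T1|]. apply mv_q.
      pose proof (wpath_LGLX hv hs [g; fib_phi hs h] hq) as W2. simpl in W2.
      apply rst_trans with (q ++ [LG (lam v) g] ++ [LG (lam v) (fib_phi hs h); LX (lam e)] ++ []).
      * apply rst_sym. eapply weq_fwd' with (l := q) (r := [LX (lam e)]); [constructor|..].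
        -- exact W2.
        -- reflexivity.
        -- reflexivity.
      * unfold fib_phi. rewrite <- LG_tr.
        eapply weq_fwd' with (l := q ++ [LG (lam v) g]) (r := []); [apply pr_conj|..].
        -- unfold fib_phi in W2. rewrite <- LG_tr in W2. rewrite <- app_assoc. exact W2.
        -- rewrite <- app_assoc; reflexivity.
        -- rewrite (LG_tr E2). rewrite <- !app_assoc; reflexivity.
    + apply (L hBl) in Hb; subst; apply rst_refl.
  - apply rst_refl.
  - apply rst_sym; auto.
  - eapply rst_trans; eauto.
Qed.

Lemma step_typ u u' s a : TS u s -> wpath u u' [a] -> TS u' (step s a).
Proof.
  destruct s as [v q b]; intros [hv [hu hq]] Ha; simpl in hv, hu, hq.
  destruct a as [x | w g]; unfold step; cbn [sv sq sb].
  - simpl in Ha; destruct Ha as [hx1 hx2]. destruct (dec_eq (gm x) x) as [hx|hx].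
    + rewrite gp_vert in hx2 by auto. split; [|split]; simpl; auto.
      rewrite hu, <- hx1, hx; auto.
    + subst u'. assert (hfv : gm x = rho v) by (rewrite hu; auto).
      destruct (fib_surj hv hfv hx b) as [d Hd]. rewrite Hd. apply out_typ; auto.
  - simpl in Ha; destruct Ha as [h1 [h2 h3]]. subst u u'.
    destruct (dec_eq w (rho v)) as [e|n]; [|exfalso; auto].
    split; [|split]; simpl; auto.
Qed.

Lemma push_typ u u' s l : TS u s -> wpath u u' l -> TS u' (push s l).
Proof.
  revert u s; induction l as [|a l IH]; intros u s hs hl; simpl in *.
  - subst; auto.
  - destruct (@wpath_app_inv X u u' [a] l hl) as [u1 [H1 H2]].
    apply IH with u1; auto. eapply step_typ; eauto.
Qed.

Lemma out_path_tail (v : B) (f : X) (d : fibel v f) q :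
  gm v = v -> gm f = rho v -> wpath y0 (lam v) q ->
  wpath (lam v) (lam (gm (gb (fe d)))) [LG (lam v) (fg d); LX (lam (fe d))].
Proof.
  intros hv hfv hq. destruct (out_typ d hv hfv hq) as [_ [_ H]]. unfold out in H; simpl in H.
  destruct (wpath_app_inv H) as [u [H1 H2]]. rewrite <- (wpath_tgt hq H1) in H2. exact H2.
Qed.

Lemma step_mv u u' s t a : TS u s -> TS u t -> Mv s t -> wpath u u' [a] ->
  Steq u' (step s a) (step t a).
Proof.
  intros hs ht m Ha.
  pose proof (step_typ hs Ha) as hs'. pose proof (step_typ ht Ha) as ht'.
  destruct m as [v q q' b Hq | v q g b].
  - destruct hs as [hv [hu hq]]; simpl in hv, hu, hq.
    destruct a as [x | w h]; unfold step in *; cbn [sv sq sb] in *.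
    + destruct (dec_eq (gm x) x) as [hx|hx].
      * apply Steq_mv; auto. constructor; auto.
      * simpl in Ha; destruct Ha as [hx1 hx2]. assert (hfv : gm x = rho v) by (rewrite hu; auto).
        destruct (fib_surj hv hfv hx b) as [d Hd]. rewrite Hd in *.
        apply Steq_mv; auto. unfold out. constructor.
        apply weq_app_r with (lam v); auto. eapply out_path_tail; eauto.
    + destruct (dec_eq w (rho v)) as [e|n]; apply Steq_mv; auto; constructor; auto.
  - destruct ht as [hv [hu hq]]; simpl in hv, hu, hq.
    destruct a as [x | w h]; unfold step in *; cbn [sv sq sb] in *.
    + destruct (dec_eq (gm x) x) as [hx|hx].
      * apply Steq_mv; auto. constructor.
      * simpl in Ha; destruct Ha as [hx1 hx2]. assert (hfv : gm x = rho v) by (rewrite hu; auto).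
        destruct (fib_surj hv hfv hx b) as [d1 H1]. destruct (fib_surj hv hfv hx (lact g b)) as [d2 H2].
        rewrite H1, H2 in *.
        apply Steq_trans with (out q (fib_lact g d1)).
        -- apply Steq_mv; auto. destruct d1 as [e hr hse g1 b1]. unfold out; simpl. constructor.
           apply weq_fwd' with (l := q) (a := [LG (lam v) g; LG (lam v) g1]) (b := [LG (lam v) (gmul g g1)])
             (r := [LX (lam e)]); [constructor| |rewrite <- !app_assoc; reflexivity|reflexivity].
           destruct hs' as [_ [_ W]]. unfold out in W; simpl in W. rewrite <- !app_assoc in W. exact W.
        -- subst. apply out_rel; auto. apply fib_inj; auto.
           rewrite (fib_lact_eq hv hfv hx). rewrite (dec_some H1), (dec_some H2). reflexivity.
    + destruct (dec_eq w (rho v)) as [e|n]; apply Steq_mv; auto.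
      rewrite <- (lact_ract hB hBl). constructor. constructor.
Qed.

Lemma step_steq u u' s t a : Steq u s t -> wpath u u' [a] -> Steq u' (step s a) (step t a).
Proof.
  intros H Ha. induction H as [s t [hs [ht m]]| | |].
  - eapply step_mv; eauto.
  - apply rst_refl.
  - apply rst_sym; auto.
  - eapply rst_trans; eauto.
Qed.

Lemma push_steq u u' s t l : Steq u s t -> wpath u u' l -> Steq u' (push s l) (push t l).
Proof.
  revert u s t; induction l as [|a l IH]; intros u s t H hl; simpl in *.
  - subst; auto.
  - destruct (@wpath_app_inv X u u' [a] l hl) as [u1 [H1 H2]].
    apply IH with u1; auto. eapply step_steq; eauto.
Qed.

Lemma edge_gb (x : X) : gm x <> x -> gm (gb x) <> gb x.
Proof.
  intros hx h. apply hx. apply gm_gb. apply gm_gb in h. rewrite gbK in h.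
  symmetry; exact h.
Qed.

Lemma back (e : B) (he : gm (rho e) <> rho e) Q (b : Bs e) :
  wpath y0 (lam (gm (gb e))) Q ->
  Steq (gm (rho e)) (step (MkSt (gm (gb e)) Q (bm (bb b))) (LX (gb (rho e))))
       (MkSt (gm e) (Q ++ [LX (lam (gb e))]) (bm b)).
Proof.
  intro hQ. unfold step; cbn [sv sq sb].
  destruct (dec_eq (gm (gb (rho e))) (gb (rho e))) as [hx|hx]; [exfalso; apply (edge_gb he hx)|].
  assert (hv : gm (gm (gb e)) = gm (gb e)) by apply gmV.
  assert (hfv : gm (gb (rho e)) = rho (gm (gb e))) by (rewrite gmap_m, gmap_b; reflexivity).
  destruct (fib_surj hv hfv hx (bm (bb b))) as [d Hd]. rewrite Hd.
  assert (hr : rho (gb e) = gb (rho e)) by apply gmap_b.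
  set (ds := @FibEl Y X B (gm (gb e)) (gb (rho e)) (gb e) hr eq_refl gone (bb b)).
  assert (Ed : fibmap d = fibmap ds).
  { rewrite (dec_some Hd). unfold ds, fibmap; simpl. rewrite (lact_one hB hBl). reflexivity. }
  pose proof (out_typ ds hv hfv hQ) as Ts.
  replace (gm (rho e)) with (gp (gb (rho e))) by apply gp_gb.
  apply Steq_trans with (out Q ds); [apply out_rel; auto; apply fib_inj; auto|].
  unfold out in *; unfold ds in *; cbn [fe fg fb] in *.
  rewrite (St_tr (f_equal gm (gbK e))) in *. rewrite (bmbbbb hB hBl) in *.
  apply Steq_mv; auto. constructor.
  eapply weq_fwd' with (l := Q) (a := [LG (lam (gm (gb e))) gone]) (r := [LX (lam (gb e))]);
    [constructor| |reflexivity|reflexivity].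
  destruct Ts as [_ [_ W]]. exact W.
Qed.

Lemma step_LG_eq (v : B) q (b : Bs v) w g (e : w = rho v) :
  step (MkSt v q b) (LG w g) = MkSt v q (ract b (tr (@GrT X) e g)).
Proof.
  unfold step; cbn [sv sq sb]. destruct (dec_eq w (rho v)) as [e'|n]; [|contradiction].
  rewrite (proof_irrelevance _ e' e); reflexivity.
Qed.

Lemma step_LX_vert s x : gm x = x -> step s (LX x) = s.
Proof. intro hx; unfold step. destruct (dec_eq (gm x) x); [auto|contradiction]. Qed.

Lemma step_LX_edge (v : B) q (b : Bs v) x d :
  gm x <> x -> dec v x b = Some d -> step (MkSt v q b) (LX x) = out q d.
Proof.
  intros hx Hd; unfold step; cbn [sv sq sb]. destruct (dec_eq (gm x) x); [contradiction|].
  rewrite Hd; reflexivity.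
Qed.

Lemma push_prel u u' s a b : TS u s -> prel a b -> wpath u u' a -> Steq u' (push s a) (push s b).
Proof.
  destruct s as [v q b0]; intros Ts Hp Ha. pose proof Ts as [hv [hu hq]]; simpl in hv, hu, hq.
  destruct Hp as [w g h | w | w hw | x | x g]; unfold push; cbn [fold_left].
  - simpl in Ha. destruct Ha as [h1 [h2 [h3 [h4 h5]]]].
    assert (e : w = rho v) by (rewrite h2; auto).
    rewrite !(step_LG_eq _ _ _ e). rewrite (ract_ract hB hBl), trT_gmul. apply rst_refl.
  - simpl in Ha. destruct Ha as [h1 [h2 h3]].
    assert (e : w = rho v) by (rewrite h2; auto).
    rewrite !(step_LG_eq _ _ _ e). rewrite trT_gone, (ract_one hB hBl). apply rst_refl.
  - rewrite step_LX_vert by auto. apply rst_refl.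
  - simpl in Ha. destruct Ha as [h1 [h2 h3]]. rewrite gp_gb in h3. subst u'.
    destruct (dec_eq (gm x) x) as [hx|hx].
    + rewrite !step_LX_vert; auto; [apply rst_refl|].
      rewrite (gb_vert hx). auto.
    + assert (hfv : gm x = rho v) by (rewrite hu; auto).
      destruct (fib_surj hv hfv hx b0) as [d Hd]. rewrite (step_LX_edge _ hx Hd).
      pose proof (dec_some Hd) as Eb. pose proof (out_typ d hv hfv hq) as To.
      destruct d as [e hr hs g be]. unfold fibmap in Eb; simpl in Eb. subst x v b0.
      unfold out in *; cbn [fe fg fb] in *.
      assert (Ha2 : wpath (gp (rho e)) (gm (rho e)) [LX (gb (rho e))]) by (split; [reflexivity|apply gp_gb]).
      assert (T1 := Steq_TS (back hx be (proj2 (proj2 To))) (step_typ To Ha2)).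
      apply Steq_trans with (MkSt (gm e) ((q ++ [LG (lam (gm e)) g; LX (lam e)]) ++ [LX (lam (gb e))]) (bm be)).
      * apply back; auto. apply To.

      * assert (T2 : TS (gm (rho e)) (MkSt (gm e) (q ++ [LG (lam (gm e)) g]) (bm be))).
        { apply (proj2 (Mv_TS (gm (rho e)) (@mv_l (gm e) q g (bm be)))). rewrite h1. exact Ts. }
        eapply Steq_trans; [apply Steq_mv'; [exact T2|apply mv_q]|].
        -- destruct T1 as [_ [_ W]]. simpl in W.
           eapply weq_fwd' with (l := q ++ [LG (lam (gm e)) g]) (a := [LX (lam e); LX (gb (lam e))]) (r := []);
             [constructor| | |rewrite app_nil_r; reflexivity].
           ++ rewrite (gmap_b lam) in W. rewrite <- !app_assoc in W. simpl in W |- *. rewrite <- app_assoc. exact W.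
           ++ rewrite (gmap_b lam). rewrite <- !app_assoc. reflexivity.
        -- apply Steq_mv; [exact T2|]. apply mv_l.
  - simpl in Ha. destruct Ha as [h1 [h2 [h3 h4]]]. subst u'.
    assert (e1 : gm x = rho v) by (rewrite hu; auto).
    rewrite (step_LG_eq _ _ _ e1).
    destruct (dec_eq (gm x) x) as [hx|hx].
    + rewrite !step_LX_vert by auto.
      assert (hb : gb x = x) by (apply gb_vert; auto).
      assert (e2 : gm (gb x) = rho v) by (rewrite hb; auto).
      rewrite (step_LG_eq _ _ _ e2). apply Steq_eq. do 3 f_equal.
      assert (Hg : tr (@GrT X) hb (resb g) = g) by (apply hX).
      apply tr_sym in Hg. rewrite Hg, resm_trT, tr_trans. apply tr_irr.
    + destruct (fib_surj hv e1 hx b0) as [d2 Hd2].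
      destruct (fib_surj hv e1 hx (ract b0 (tr (@GrT X) e1 (resm g)))) as [d1 Hd1].
      rewrite (step_LX_edge _ hx Hd1), (step_LX_edge _ hx Hd2).
      apply Steq_trans with (out q (fib_ract d2 g)).
      * apply out_rel; auto. apply fib_inj; auto.
        rewrite (fib_ract_eq hv e1 hx), (dec_some Hd1), (dec_some Hd2); reflexivity.
      * destruct d2 as [e hr hs g2 b2]. subst x. unfold out, fib_ract; cbn [fe fg fb fe_rho fe_src].
        assert (e3 : gm (gb (rho e)) = rho (gm (gb e))) by (rewrite gmap_m, gmap_b; reflexivity).
        rewrite (step_LG_eq _ _ _ e3). apply Steq_eq. f_equal.
        rewrite (bb_ract hY hB hBl), (bm_ract hY hB hBl). f_equal.
        rewrite tr_id, resm_trT, tr_trans. apply tr_irr.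
Qed.

Lemma push_weq u u' s W W' : TS u s -> weq u u' W W' -> Steq u' (push s W) (push s W').
Proof.
  intros Ts H. induction H as [W W' [HW [HW' [l [r [a [b [Hp [E1 E2]]]]]]]]| | |].
  - subst. rewrite !push_app.
    destruct (wpath_app_inv HW) as [u1 [H1 H2]].
    destruct (wpath_app_inv H2) as [u2 [H3 H4]].
    apply push_steq with u2; auto.
    apply push_prel with u1; auto. eapply push_typ; eauto.
  - apply rst_refl.
  - apply rst_sym; auto.
  - eapply rst_trans; eauto.
Qed.
End Push.
Arguments MkSt {Y X B} sv sq sb.


Section Main.
Variables (Y X W : gog) (B : gob Y X) (C : gob X W).
Hypotheses (hY : gog_valid Y) (hX : gog_valid X) (hW : gog_valid W)
  (hB : gob_valid B) (hC : gob_valid C)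
  (hBl : leibniz_gob B) (hCl : leibniz_gob C) (hfib : left_fibrant B).
Variables (dag : Y) (star : X) (ddag : W).
Hypotheses (hdag : gm dag = dag) (hstar : gm star = star) (hddag : gm ddag = ddag).

Definition P := gob_prod B C.

Definition Pch (u : X) : list (letter X) :=
  match excluded_middle_informative (exists p, wpath u star p) with
  | left H => proj1_sig (constructive_indefinite_description _ H)
  | right _ => [] end.

Lemma Pch_spec (u : X) : gm u = u -> wpath u star (Pch u).
Proof.
  intro hu. unfold Pch. destruct (excluded_middle_informative _) as [H|H].
  - apply (proj2_sig (constructive_indefinite_description _ H)).
  - exfalso; apply H. destruct (conn_path hX u star) as [p Hp]. rewrite hu, hstar in Hp. eauto.
Qed.

Definition pz1 (z : P) : B := fst (proj1_sig z).
Definition pz2 (z : P) : C := snd (proj1_sig z).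

Definition F (s : fbrep P) : fbrep B * fbrep C :=
  (FBRep (pz1 (rz s)) (rq s) (fst (rb s)) (Pch (rho (pz1 (rz s)))),
   FBRep (pz2 (rz s)) (winv (Pch (rho (pz1 (rz s))))) (snd (rb s)) (rp s)).

Definition toP (w : C) (c : Bs w) (r : list (letter W)) (st : St B) : option (fbrep P) :=
  match dec_eq (rho (sv st)) (lam w) with
  | left h => Some (prep h (sq st) (sb st) c r)
  | right _ => None end.

Definition Psi (t : fbrep B * fbrep C) : option (fbrep P) :=
  toP (rb (snd t)) (rp (snd t))
      (push (MkSt (rz (fst t)) (rq (fst t)) (rb (fst t))) (rp (fst t) ++ rq (snd t))).

Definition OR (x y : option (fbrep P)) : Prop :=
  match x, y with
  | Some a, Some b => fbeq dag ddag a b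
  | None, None => True
  | _, _ => False end.

Lemma OR_refl x : OR x x.
Proof. destruct x; simpl; auto. apply rst_refl. Qed.
Lemma OR_sym x y : OR x y -> OR y x.
Proof. destruct x, y; simpl; auto. apply rst_sym. Qed.
Lemma OR_trans x y z : OR x y -> OR y z -> OR x z.
Proof. destruct x, y, z; simpl; try tauto. apply rst_trans. Qed.

Lemma OR_crst (A : Type) (R : relation A) (f : A -> option (fbrep P)) x y :
  (forall a b, R a b -> OR (f a) (f b)) -> clos_refl_sym_trans A R x y -> OR (f x) (f y).
Proof.
  intros HR H; induction H; auto using OR_refl, OR_sym.
  eapply OR_trans; eauto.
Qed.

Lemma pvert_gm (v : B) (w : C) (h : rho v = lam w) :
  gm v = v -> gm w = w -> gm (pvert h) = pvert h.
Proof. intros hv hw. apply sig_eq; simpl. rewrite hv, hw; auto. Qed.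

Lemma pz_gm (z : P) : gm z = z -> gm (pz1 z) = pz1 z /\ gm (pz2 z) = pz2 z.
Proof.
  intro H. apply (f_equal (@proj1_sig _ _)) in H. destruct z as [[v w] h]; simpl in *.
  injection H; auto.
Qed.

Lemma prep_typ (v : B) (w : C) (h : rho v = lam w) q b c r :
  gm v = v -> gm w = w -> wpath dag (lam v) q -> wpath (rho w) ddag r ->
  fb_typ dag ddag (prep h q b c r).
Proof. intros; split; [apply pvert_gm; auto|split; auto]. Qed.

Lemma fbeq_step (Y' X' : gog) (B' : gob Y' X') (a : Y') (o : X') (r r' : fbrep B') :
  fb_typ a o r -> fb_typ a o r' -> fb_rel a o r r' -> fbeq a o r r'.
Proof. intros; apply rst_step; auto. Qed.

Lemma fteq_step (t t' : fbrep B * fbrep C) :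
  ft_typ dag star ddag t -> ft_typ dag star ddag t' -> ft_rel dag star ddag t t' ->
  fteq dag star ddag t t'.
Proof. intros; apply rst_step; auto. Qed.

Lemma fbeq_eq (Y' X' : gog) (B' : gob Y' X') (a : Y') (o : X') (r r' : fbrep B') :
  r = r' -> fbeq a o r r'.
Proof. intros ->; apply rst_refl. Qed.

Lemma K (v : B) (w : C) q (b : Bs v) (c : Bs w) r p p' :
  rho v = lam w -> gm v = v -> gm w = w -> wpath dag (lam v) q -> wpath (rho w) ddag r ->
  wpath (rho v) star p -> wpath (rho v) star p' ->
  fteq dag star ddag (FBRep v q b p, FBRep w (winv p) c r) (FBRep v q b p', FBRep w (winv p') c r).
Proof.
  intros h hv hw hq hr hp hp'.
  assert (hip : wpath star (lam w) (winv p)) by (rewrite <- h; apply wpath_winv; auto).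
  assert (hip' : wpath star (lam w) (winv p')) by (rewrite <- h; apply wpath_winv; auto).
  assert (hL : wpath star star (winv p ++ p')) by (apply wpath_app with (rho v); auto; apply wpath_winv; auto).
  assert (hL2 : wpath star (lam w) ((winv p ++ p') ++ winv p')).
  { apply wpath_app with star; auto. }
  apply rst_trans with (FBRep v q b p, FBRep w ((winv p ++ p') ++ winv p') c r).
  - apply fteq_step.
    + split; repeat split; auto.
    + split; repeat split; auto.
    + apply ftr_2. apply fbeq_step; [repeat split; auto|repeat split; auto|].
      apply fbr_q. rewrite <- app_assoc.
      apply rst_sym. rewrite <- h.
      eapply rst_trans; [apply weq_app_l with (rho v); [apply weq_inv_r with star; exact hp'|]|].
      * apply wpath_winv; auto.
      * rewrite app_nil_r. apply rst_refl.
  - apply rst_trans with (fb_ract (FBRep v q b p) (winv p ++ p'), FBRep w (winv p') c r).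
    + apply rst_sym. apply fteq_step.
      * split; repeat split; simpl; auto. apply wpath_app with star; auto.
      * split; repeat split; auto.
      * apply ftr_m; auto.
    + apply fteq_step.
      * split; repeat split; simpl; auto. apply wpath_app with star; auto.
      * split; repeat split; auto.
      * apply ftr_1. apply fbeq_step; [repeat split; simpl; auto; apply wpath_app with star; auto|repeat split; auto|].
        apply fbr_p. simpl. rewrite app_assoc.
        eapply rst_trans; [apply weq_app_r with (rho v); [eapply weq_inv_r; exact hp|exact hp']|].
        apply rst_refl.
Qed.

Lemma F_typ s : fb_typ dag ddag s -> ft_typ dag star ddag (F s).
Proof.
  destruct s as [[[v w] h] q [b c] r]; intros [hz [hq hr]].
  destruct (pz_gm hz) as [hv hw]; unfold pz1, pz2 in *; simpl in *.
  unfold F, pz1, pz2; simpl. split; repeat split; simpl; auto.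
  - apply Pch_spec, gm_rho_vert; auto.
  - rewrite <- h. apply wpath_winv. apply Pch_spec, gm_rho_vert; auto.
Qed.

Lemma F_prep (v : B) (w : C) (h : rho v = lam w) q b c r p :
  fb_typ dag ddag (prep h q b c r) -> wpath (rho v) star p ->
  fteq dag star ddag (F (prep h q b c r)) (FBRep v q b p, FBRep w (winv p) c r).
Proof.
  intros [hz [hq hr]] hp. destruct (pz_gm hz) as [hv hw]; unfold pz1, pz2 in *; simpl in *.
  unfold F; simpl. apply K; auto. apply Pch_spec, gm_rho_vert; auto.
Qed.

Lemma Kgen (v : B) (w : C) q (b : Bs v) (c : Bs w) r p1 p2 q1 q2 :
  rho v = lam w -> gm v = v -> gm w = w -> wpath dag (lam v) q -> wpath (rho w) ddag r ->
  wpath (rho v) star p1 -> wpath (rho v) star p2 ->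
  wpath star (lam w) q1 -> wpath star (lam w) q2 ->
  weq (rho v) (lam w) (p1 ++ q1) (p2 ++ q2) ->
  fteq dag star ddag (FBRep v q b p1, FBRep w q1 c r) (FBRep v q b p2, FBRep w q2 c r).
Proof.
  intros h hv hw hq hr hp1 hp2 hq1 hq2 E.
  assert (hL : wpath star star (winv p2 ++ p1)) by (apply wpath_app with (rho v); auto; apply wpath_winv; auto).
  assert (hpL : wpath (rho v) star (p2 ++ (winv p2 ++ p1))) by (apply wpath_app with star; auto).
  assert (hLq : wpath star (lam w) ((winv p2 ++ p1) ++ q1)) by (apply wpath_app with star; auto).
  apply rst_trans with (fb_ract (FBRep v q b p2) (winv p2 ++ p1), FBRep w q1 c r).
  - apply fteq_step; [split; repeat split; auto|split; repeat split; auto|].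
    apply ftr_1. apply fbeq_step; [repeat split; auto|repeat split; auto|].
    apply fbr_p. simpl. rewrite app_assoc. apply rst_sym.
    change (weq (rho v) star ((p2 ++ winv p2) ++ p1) ([] ++ p1)).
    apply weq_app_r with (rho v); auto. eapply weq_inv_r; eauto.
  - apply rst_trans with (FBRep v q b p2, fb_lact (winv p2 ++ p1) (FBRep w q1 c r)).
    + apply fteq_step; [split; repeat split; auto|split; repeat split; simpl; auto|].
      apply ftr_m; auto.
    + apply fteq_step; [split; repeat split; simpl; auto|split; repeat split; auto|].
      apply ftr_2. apply fbeq_step; [repeat split; simpl; auto|repeat split; auto|].
      apply fbr_q. simpl. rewrite <- app_assoc.
      eapply rst_trans; [apply weq_app_l with (rho v); [exact E|apply wpath_winv; auto]|].
      rewrite app_assoc. change q2 with ([] ++ q2) at 2.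
      apply weq_app_r with star; auto. eapply weq_inv_l; eauto.
Qed.

Lemma F_tensor (v : B) (w : C) (h : rho v = lam w) q r (x x' : @Bs _ _ P (pvert h)) :
  gm v = v -> gm w = w -> wpath dag (lam v) q -> wpath (rho w) ddag r ->
  beq x x' -> fteq dag star ddag (F (FBRep (pvert h) q x r)) (F (FBRep (pvert h) q x' r)).
Proof.
  intros hv hw hq hr H. induction H as [x x' Ht| | |].
  - destruct Ht as [[H1 H2]|[[H1 H2]|[b [k [c [-> ->]]]]]].
    + destruct x as [b c], x' as [b' c']; simpl in *. apply (L hBl) in H1. subst. apply rst_refl.
    + destruct x as [b c], x' as [b' c']; simpl in *. apply (L hCl) in H2. subst. apply rst_refl.
    + unfold F, pz1, pz2; simpl.
      assert (hrv : gm (rho v) = rho v) by (apply gm_rho_vert; auto).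
      assert (hP : wpath (rho v) star (Pch (rho v))) by (apply Pch_spec; auto).
      assert (hiP : wpath star (lam w) (winv (Pch (rho v)))) by (rewrite <- h; apply wpath_winv; auto).
      apply rst_trans with (FBRep v q b (LG (rho v) k :: Pch (rho v)), FBRep w (winv (Pch (rho v))) c r).
      * apply fteq_step; [split; repeat split; auto|split; repeat split; simpl; auto|].
        apply ftr_1. apply fbeq_step; [repeat split; auto|repeat split; simpl; auto|]. apply fbr_r.
      * apply rst_trans with (FBRep v q b (Pch (rho v)), FBRep w (winv (Pch (rho v)) ++ [LG (lam w) (tr (@GrT X) h k)]) c r).
        -- apply Kgen; auto.
           ++ simpl; auto.
           ++ apply wpath_app with (lam w); auto. simpl. rewrite <- h. auto.
           ++ rewrite <- (LG_tr h). 
              apply rst_trans with [LG (rho v) k].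
              ** change (weq (rho v) (lam w) ([LG (rho v) k] ++ (Pch (rho v) ++ winv (Pch (rho v)))) ([LG (rho v) k] ++ [])).
                 apply weq_app_l with (rho v).
                 --- rewrite <- h. eapply weq_inv_r; eauto.
                 --- simpl; auto.
              ** rewrite app_assoc. apply rst_sym. change [LG (rho v) k] with ([] ++ [LG (rho v) k]).
                 rewrite <- h. apply weq_app_r with (rho v); [eapply weq_inv_r; eauto|simpl; auto].
        -- apply fteq_step; [split; repeat split; auto|split; repeat split; auto|].
           ++ apply wpath_app with (lam w); auto. simpl. rewrite <- h. auto.
           ++ apply ftr_2. apply fbeq_step; [repeat split; auto|repeat split; auto|].
              ** apply wpath_app with (lam w); auto. simpl. rewrite <- h. auto.
              ** apply fbr_l.
  - apply rst_refl.
  - apply rst_sym; auto.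
  - eapply rst_trans; eauto.
Qed.

Lemma FBRep_tr (Y' X' : gog) (B' : gob Y' X') (z z' : B') (e : z = z') q (b : Bs z) p :
  FBRep z q b p = FBRep z' q (tr (@BsT Y' X' B') e b) p.
Proof. destruct e; reflexivity. Qed.

Ltac ftyp := split; (split; [|split]); cbn [fst snd rz rq rb rp]; try assumption; auto; try apply gmV.
Ltac fbtyp := split; [|split]; cbn [rz rq rb rp]; try assumption; auto; try apply gmV.

Lemma F_edge (z : P) q (x : Bs z) r :
  gm z <> z -> fb_typ dag ddag (FBRep (gm z) q (bm x) r) ->
  fb_typ dag ddag (FBRep (gm (gb z)) (q ++ [LX (lam z)]) (bm (bb x)) (LX (gb (rho z)) :: r)) ->
  fteq dag star ddag (F (FBRep (gm z) q (bm x) r))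
    (F (FBRep (gm (gb z)) (q ++ [LX (lam z)]) (bm (bb x)) (LX (gb (rho z)) :: r))).
Proof.
  destruct z as [[e e'] hz]; destruct x as [b c]. intros hne [T1 [hq hr]] [T2 [hq2 hr2]].
  unfold F, pz1, pz2; cbn in *.
  set (P1 := Pch (rho (gm e))). set (P2 := Pch (rho (gm (gb e)))).
  assert (hP1 : wpath (rho (gm e)) star P1) by (apply Pch_spec; rewrite gmap_m, gmV; auto).
  assert (hP2 : wpath (rho (gm (gb e))) star P2) by (apply Pch_spec; rewrite gmap_m, gmV; auto).
  assert (h1 : rho (gm e) = lam (gm e')) by (rewrite !gmap_m, hz; auto).
  assert (h2 : rho (gm (gb e)) = lam (gm (gb e'))) by (rewrite !gmap_m, !gmap_b, hz; auto).
  destruct (dec_eq (gm e) e) as [hev|he].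
  - assert (he' : gm e' <> e').
    { intro H. apply hne. apply sig_eq; simpl. rewrite hev, H; auto. }
    assert (hbe : gb e = e) by (apply gm_gb; auto).
    assert (E : gm (gb e) = gm e) by (rewrite hbe; auto).
    rewrite (FBRep_tr E). rewrite (@tr_irr _ (@BsT Y X B) _ _ E (f_equal gm hbe)), <- (bm_tr hbe), (bb_vert hB hBl).
    rewrite E in hP2, hq2, h2.
    assert (hle : gm (lam e) = lam e) by (apply gm_lam_vert; auto).
    assert (hle' : gm (lam e') = lam e') by (rewrite <- hz; apply gm_rho_vert; auto).
    assert (hiP1 : wpath star (lam (gm e')) (winv P1)) by (rewrite <- h1; apply wpath_winv; auto).
    assert (hw : wpath star (lam (gm (gb e'))) (winv P1 ++ [LX (lam e')])).
    { apply wpath_app with (lam (gm e')); auto. simpl. split; [rewrite gmap_m; auto|].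
      unfold gp. rewrite gmap_m, gmap_b; auto. }
    assert (hw' : wpath star (lam (gm (gb e'))) (winv P1)).
    { pose proof (LX_vert_weq (l := winv P1) (r := []) hle' hw) as H. apply (weq_typ H) in hw. rewrite app_nil_r in hw; exact hw. }
    apply rst_trans with (FBRep (gm e) q (bm b) P1, FBRep (gm (gb e')) (winv P1 ++ [LX (lam e')]) (bm (bb c)) (LX (gb (rho e')) :: r)).
    { apply fteq_step; [ftyp|ftyp|]. apply ftr_2. apply fbeq_step; [fbtyp|fbtyp|]. apply fbr_e; auto. }
    apply rst_trans with (FBRep (gm e) q (bm b) P1, FBRep (gm (gb e')) (winv P1) (bm (bb c)) (LX (gb (rho e')) :: r)).
    { apply fteq_step; [ftyp|ftyp|]. apply ftr_2. apply fbeq_step; [fbtyp|fbtyp|]. apply fbr_q.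
      pose proof (LX_vert_weq (l := winv P1) (r := []) hle' hw) as H. rewrite app_nil_r in H. exact H. }
    apply rst_trans with (FBRep (gm e) (q ++ [LX (lam e)]) (bm b) P1, FBRep (gm (gb e')) (winv P1) (bm (bb c)) (LX (gb (rho e')) :: r)).
    { apply fteq_step; [ftyp|ftyp|]. apply ftr_1. apply fbeq_step; [fbtyp|fbtyp|]. apply fbr_q.
      pose proof (LX_vert_weq (l := q) (r := []) hle hq2) as H. rewrite app_nil_r in H. apply rst_sym; exact H. }
    apply K; auto; apply gmV.
  - assert (hre : gm (rho e) <> rho e) by (apply (proj1 hfib); auto).
    assert (he' : gm e' <> e').
    { intro H. apply hre. rewrite hz. apply gm_lam_vert; auto. }
    assert (hP1' : wpath (rho (gm (gb e))) star (LX (gb (rho e)) :: P1)).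
    { split; [rewrite gmap_m, gmap_b; auto|]. rewrite gp_gb, <- gmap_m. auto. }
    eapply rst_trans; [|apply rst_sym; apply (K (bm (bb b)) (bm (bb c)) (p := P2) (p' := LX (gb (rho e)) :: P1)); auto; apply gmV].
    rewrite winv_cons. cbn [linv]. replace (LX (gb (gb (rho e)))) with (LX (lam e')) by (rewrite gbK, hz; reflexivity).
    assert (hiP1 : wpath star (lam (gm e')) (winv P1)) by (rewrite <- h1; apply wpath_winv; auto).
    assert (hw : wpath star (lam (gm (gb e'))) (winv P1 ++ [LX (lam e')])).
    { apply wpath_app with (lam (gm e')); auto. simpl. split; [rewrite gmap_m; auto|].
      unfold gp. rewrite gmap_m, gmap_b; auto. }
    apply rst_trans with (FBRep (gm (gb e)) (q ++ [LX (lam e)]) (bm (bb b)) (LX (gb (rho e)) :: P1),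
                          FBRep (gm e') (winv P1) (bm c) r).
    + apply fteq_step; [ftyp|ftyp|].
      apply ftr_1. apply fbeq_step; [fbtyp|fbtyp|].
      apply fbr_e; auto.
    + apply fteq_step; [ftyp|ftyp|].
      apply ftr_2. apply fbeq_step; [fbtyp|fbtyp|].
      apply fbr_e; auto.
Qed.

Lemma F_rel s s' : fb_typ dag ddag s -> fb_typ dag ddag s' -> fb_rel dag ddag s s' ->
  fteq dag star ddag (F s) (F s').
Proof.
  intros Hs Hs' Hr. pose proof (F_typ Hs) as Ts. pose proof (F_typ Hs') as Ts'.
  destruct Hr as [z q q' x r Hq | z q x r r' Hr | z q x x' r Hx | z q g x r | z q x h r | z q x r Hz].
  - apply fteq_step; auto. apply ftr_1. apply fbeq_step; [apply Ts|apply Ts'|]. apply fbr_q; auto.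
  - apply fteq_step; auto. apply ftr_2. apply fbeq_step; [apply Ts|apply Ts'|]. apply fbr_p; auto.
  - destruct z as [[v w] h]. destruct Hs as [hz [hq hr]]. destruct (pz_gm hz) as [hv hw].
    unfold pz1, pz2 in *; simpl in *. apply (F_tensor (h := h)); auto.
  - apply fteq_step; auto. apply ftr_1. apply fbeq_step; [apply Ts|apply Ts'|]. exact (@fbr_l _ _ B dag star (pz1 z) q g (fst x) _).
  - apply fteq_step; auto. apply ftr_2. apply fbeq_step; [apply Ts|apply Ts'|]. apply fbr_r.
  - apply F_edge; auto.
Qed.

Lemma F_fbeq s s' : fb_typ dag ddag s -> fb_typ dag ddag s' -> fbeq dag ddag s s' ->
  fteq dag star ddag (F s) (F s').
Proof.
  intros _ _ H. induction H as [s s' [Hs [Hs' Hr]]| | |].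
  - apply F_rel; auto.
  - apply rst_refl.
  - apply rst_sym; auto.
  - eapply rst_trans; eauto.
Qed.
End Main.


Section Main2.
Variables (Y X W : gog) (B : gob Y X) (C : gob X W).
Hypotheses (hY : gog_valid Y) (hX : gog_valid X) (hW : gog_valid W)
  (hB : gob_valid B) (hC : gob_valid C)
  (hBl : leibniz_gob B) (hCl : leibniz_gob C) (hfib : left_fibrant B).
Variables (dag : Y) (star : X) (ddag : W).
Hypotheses (hdag : gm dag = dag) (hstar : gm star = star) (hddag : gm ddag = ddag).

Notation PP := (P B C).
Notation ORr := (@OR Y X W B C dag ddag).

Lemma toP_eq (w : C) (c : Bs w) r (st : St B) (h : rho (sv st) = lam w) :
  toP c r st = Some (prep h (sq st) (sb st) c r).
Proof.
  unfold toP. destruct (dec_eq (rho (sv st)) (lam w)) as [h'|n]; [|contradiction].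
  rewrite (proof_irrelevance _ h' h); reflexivity.
Qed.

Lemma toP_steq (w : C) (c : Bs w) r st st' :
  gm w = w -> wpath (rho w) ddag r -> Steq dag (lam w) st st' -> ORr (toP c r st) (toP c r st').
Proof.
  intros hw hr H. apply OR_crst with (2 := H). clear st st' H.
  intros s t [[hs1 [hs2 hs3]] [[ht1 [ht2 ht3]] m]].
  rewrite (toP_eq c r hs2), (toP_eq c r ht2). simpl.
  apply fbeq_step.
  - apply prep_typ; auto.
  - apply prep_typ; auto.
  - destruct m as [v q q' b Hq | v q g b]; simpl in *.
    + rewrite (proof_irrelevance _ ht2 hs2). apply fbr_q; auto.
    + rewrite (proof_irrelevance _ ht2 hs2). exact (@fbr_l _ _ PP dag ddag (pvert hs2) q g (b, c) r).
Qed.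

Lemma TS_init (v : B) q (b : Bs v) : gm v = v -> wpath dag (lam v) q -> TS dag (rho v) (MkSt v q b).
Proof. intros; split; [|split]; simpl; auto. Qed.

Lemma Psi_B_rel (r1 r1' : fbrep B) (s : fbrep C) :
  fb_typ dag star r1 -> fb_typ dag star r1' -> fb_typ star ddag s -> fb_rel dag star r1 r1' ->
  ORr (Psi (r1, s)) (Psi (r1', s)).
Proof.
  destruct s as [w q2 c r]. intros H1 H1' [hw [hq2 hr]] Hr. cbn [rz rq rb rp] in *. unfold Psi; cbn [fst snd rz rq rb rp].
  destruct Hr as [z q q' b p Hq | z q b p p' Hp | z q b b' p Hb | z q g b p | z q b h p | z q b p Hz];
    destruct H1 as [hz1 [hq1 hp1]]; destruct H1' as [hz1' [hq1' hp1']]; cbn [rz rq rb rp] in *.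
  - apply toP_steq; auto. apply (push_steq hX hB hBl hfib) with (rho z).
    + apply Steq_mv; [apply TS_init; auto|]. constructor; auto.
    + apply wpath_app with star; auto.
  - apply toP_steq; auto. apply (push_weq hY hX hB hBl hfib) with (rho z); [apply TS_init; auto|].
    apply weq_app_r with star; auto.
  - apply (L hBl) in Hb. subst. apply OR_refl.
  - apply toP_steq; auto. apply (push_steq hX hB hBl hfib) with (rho z).
    + apply Steq_mv; [apply TS_init; auto|]. constructor.
    + apply wpath_app with star; auto.
  - cbn [app]. unfold push at 2; cbn [fold_left]. rewrite (step_LG_eq q b h (eq_refl (rho z))).
    apply OR_refl.
  - assert (hre : gm (rho z) <> rho z) by (apply (proj1 hfib); auto).
    cbn [app]. unfold push at 2; cbn [fold_left]. fold (push (step (MkSt (gm (gb z)) (q ++ [LX (lam z)]) (bm (bb b))) (LX (gb (rho z)))) (p ++ q2)).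
    apply toP_steq; auto. apply (push_steq hX hB hBl hfib) with (rho (gm z)).
    + assert (Ha2 : wpath (rho (gm (gb z))) (gm (rho z)) [LX (gb (rho z))]).
      { split; [rewrite gmap_m, gmap_b; auto| apply gp_gb]. }
      pose proof (back hX hB hBl hfib hre b hq1') as Hbk.
      pose proof (Steq_TS Hbk (step_typ hBl hfib (TS_init (bm (bb b)) hz1' hq1') Ha2)) as T1.
      rewrite gmap_m. apply Steq_sym. eapply Steq_trans; [exact Hbk|].
      apply Steq_mv; [exact T1|]. constructor.
      destruct T1 as [_ [_ Wt]]; cbn [sv sq sb] in Wt.
      eapply weq_fwd' with (l := q) (a := [LX (lam z); LX (gb (lam z))]) (r := []);
        [constructor| |rewrite (gmap_b lam), <- app_assoc; reflexivity|rewrite app_nil_r; reflexivity].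
      rewrite (gmap_b lam), <- app_assoc in Wt. exact Wt.
    + apply wpath_app with star; auto.
Qed.

Lemma prep_tr (v v' : B) (w : C) (ev : v = v') (h : rho v = lam w) (h' : rho v' = lam w) q b c r :
  prep h q b c r = prep h' q (tr (@BsT Y X B) ev b) c r.
Proof. destruct ev. rewrite (proof_irrelevance _ h h'). reflexivity. Qed.

Lemma prep_typ' (v : B) (w : C) (h : rho v = lam w) q b c r :
  gm v = v -> gm w = w -> wpath dag (lam v) q -> wpath (rho w) ddag r ->
  fb_typ dag ddag (prep h q b c r).
Proof. apply prep_typ. Qed.

Lemma Psi_C_rel (r1 : fbrep B) (s s' : fbrep C) :
  fb_typ dag star r1 -> fb_typ star ddag s -> fb_typ star ddag s' -> fb_rel star ddag s s' ->
  ORr (Psi (r1, s)) (Psi (r1, s')).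
Proof.
  destruct r1 as [v q b p]. intros [hv [hq hp]] Hs Hs' Hr. cbn [rz rq rb rp] in *. unfold Psi; cbn [fst snd rz rq rb rp].
  pose proof (TS_init b hv hq) as T0.
  destruct Hr as [z q2 q2' c r Hq | z q2 c r r' Hr | z q2 c c' r Hc | z q2 g c r | z q2 c h r | z q2 c r Hz];
    destruct Hs as [hz [hq2 hr]]; destruct Hs' as [hz' [hq2' hr']]; cbn [rz rq rb rp] in *.
  - apply toP_steq; auto. apply (push_weq hY hX hB hBl hfib) with (rho v); auto.
    apply weq_app_l with star; auto.
  - pose proof (push_typ hBl hfib T0 (wpath_app hp hq2)) as TS1.
    destruct (push (MkSt v q b) (p ++ q2)) as [v' Q b'] eqn:ES. destruct TS1 as [hv' [hS hQ]]; cbn [sv sq sb] in *.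
    rewrite !(toP_eq _ _ (st := MkSt v' Q b') hS). simpl.
    apply fbeq_step; [apply prep_typ; auto|apply prep_typ; auto|]. apply fbr_p; auto.
  - apply (L hCl) in Hc. subst. apply OR_refl.
  - pose proof (push_typ hBl hfib T0 (wpath_app hp hq2')) as TS1.
    rewrite app_assoc, push_app.
    destruct (push (MkSt v q b) (p ++ q2)) as [v' Q b'] eqn:ES. destruct TS1 as [hv' [hS hQ]]; cbn [sv sq sb] in *.
    unfold push at 1; cbn [fold_left]. rewrite (step_LG_eq Q b' g (eq_sym hS)).
    rewrite !(toP_eq _ _ (st := MkSt v' Q _) hS). simpl.
    apply fbeq_step; [apply prep_typ; auto|apply prep_typ; auto|].
    apply fbr_b. apply rst_step. right; right. exists b', (tr (@GrT X) (eq_sym hS) g), c. split; [reflexivity|].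
    simpl. rewrite tr_trans, tr_id. reflexivity.
  - pose proof (push_typ hBl hfib T0 (wpath_app hp hq2)) as TS1.
    destruct (push (MkSt v q b) (p ++ q2)) as [v' Q b'] eqn:ES. destruct TS1 as [hv' [hS hQ]]; cbn [sv sq sb] in *.
    rewrite !(toP_eq _ _ (st := MkSt v' Q _) hS). simpl.
    apply fbeq_step; [apply prep_typ; auto|apply prep_typ; auto|].
    exact (@fbr_r _ _ PP dag ddag (pvert hS) Q (b', c) h r).
  - pose proof (push_typ hBl hfib T0 (wpath_app hp hq2)) as TS1.
    rewrite app_assoc, (push_app (MkSt v q b) (p ++ q2) [LX (lam z)]).
    destruct (push (MkSt v q b) (p ++ q2)) as [v' Q b'] eqn:ES. destruct TS1 as [hv' [hS hQ]]; cbn [sv sq sb] in *.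
    unfold push at 1; cbn [fold_left].
    destruct (dec_eq (gm (lam z)) (lam z)) as [hlz|hlz].
    + rewrite step_LX_vert by auto.
      assert (hvz : rho v' = lam z) by (rewrite hS, gmap_m; auto).
      assert (hS2 : rho v' = lam (gm (gb z))).
      { rewrite hvz, gmap_m, gmap_b. rewrite (gb_vert hlz); auto. }
      rewrite (toP_eq _ _ (st := MkSt v' Q b') hS), (toP_eq _ _ (st := MkSt v' Q b') hS2). simpl.
      set (zv := pvert (B := B) (C := C) hvz).
      assert (hzv : gm zv <> zv).
      { intro H. apply Hz. apply (f_equal (fun x => snd (proj1_sig x))) in H. simpl in H. exact H. }
      assert (EA : prep hS Q b' (bm c) r = FBRep (gm zv) Q (@pbm _ _ _ B C zv (b', c)) r).
      { change (FBRep (gm zv) Q (@pbm _ _ _ B C zv (b', c)) r) with (prep (proj2_sig (gm zv)) Q (bm b') (bm c) r).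
        rewrite (prep_tr hv' (proj2_sig (gm zv)) hS). rewrite (bm_vert hB hBl). reflexivity. }
      assert (hgv : gb v' = v') by (apply gm_gb; auto).
      assert (ev2 : gm (gb v') = v') by (rewrite hgv; auto).
      assert (EB : prep hS2 (Q ++ [LX (lam v')]) b' (bm (bb c)) (LX (gb (rho z)) :: r) =
                   FBRep (gm (gb zv)) (Q ++ [LX (lam zv)]) (@pbm _ _ _ B C (gb zv) (@pbb _ _ _ B C zv (b', c))) (LX (gb (rho zv)) :: r)).
      { change (FBRep (gm (gb zv)) (Q ++ [LX (lam zv)]) (@pbm _ _ _ B C (gb zv) (@pbb _ _ _ B C zv (b', c))) (LX (gb (rho zv)) :: r))
          with (prep (proj2_sig (gm (gb zv))) (Q ++ [LX (lam v')]) (bm (bb b')) (bm (bb c)) (LX (gb (rho z)) :: r)).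
        rewrite (prep_tr ev2 (proj2_sig (gm (gb zv))) hS2). f_equal.
        rewrite (@tr_irr _ (@BsT Y X B) _ _ ev2 (eq_trans (f_equal gm hgv) hv')), <- tr_trans.
        rewrite <- (bm_tr hgv), (bb_vert hB hBl), (bm_vert hB hBl). reflexivity. }
      assert (hlv : gm (lam v') = lam v') by (apply gm_lam_vert; auto).
      assert (hQ2 : wpath dag (lam v') (Q ++ [LX (lam v')])).
      { apply wpath_app with (lam v'); auto. simpl. split; auto. rewrite gp_vert; auto. }
      apply rst_trans with (FBRep (gm (gb zv)) (Q ++ [LX (lam zv)]) (@pbm _ _ _ B C (gb zv) (@pbb _ _ _ B C zv (b', c))) (LX (gb (rho zv)) :: r)).
      * rewrite EA. rewrite <- EA, <- EB. apply fbeq_step.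
        -- apply prep_typ; auto.
        -- apply prep_typ; auto; apply gmV.
        -- rewrite EA, EB. exact (@fbr_e _ _ PP dag ddag zv Q (b', c) r hzv).
      * rewrite <- EB. apply fbeq_step; [apply prep_typ; auto; apply gmV|apply prep_typ; auto; apply gmV|].
        apply fbr_q. cbn [plam pvert pz1 fst proj1_sig]. pose proof (LX_vert_weq (l := Q) (r := []) hlv hQ2) as H.
        rewrite app_nil_r in H; exact H.
    + assert (hfv : gm (lam z) = rho v') by (rewrite hS, gmap_m; auto).
      destruct (fib_surj hBl hfib hv' hfv hlz b') as [d Hd]. rewrite (step_LX_edge _ hlz Hd).
      pose proof (dec_some Hd) as Eb. destruct d as [e hre hs g0 be]. unfold fibmap in Eb; simpl in Eb.
      subst b' v'. unfold out; cbn [fe fg fb].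
      assert (hS2 : rho (gm (gb e)) = lam (gm (gb z))) by (rewrite !gmap_m, !gmap_b, hre; auto).
      rewrite (toP_eq _ _ (st := MkSt (gm e) Q _) hS), (toP_eq _ _ (st := MkSt (gm (gb e)) _ _) hS2). simpl.
      set (ze := pvert (B := B) (C := C) hre).
      assert (hze : gm ze <> ze).
      { intro H. apply hlz. apply (f_equal (fun x => fst (proj1_sig x))) in H. simpl in H.
        rewrite <- hre, <- gmap_m, H; auto. }
      assert (T2 : wpath dag (lam (gm (gb e))) (Q ++ [LG (lam (gm e)) g0; LX (lam e)])).
      { change [LG (lam (gm e)) g0; LX (lam e)] with (map (LG (lam (gm e))) [g0] ++ [LX (lam e)]).
        apply (wpath_LGLX (B := B)); auto. }
      assert (T1 : wpath dag (lam (gm e)) (Q ++ [LG (lam (gm e)) g0])).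
      { apply wpath_app with (lam (gm e)); auto. simpl. split; [apply gm_lam_vert; auto|auto]. }
      apply rst_trans with (prep hS (Q ++ [LG (lam (gm e)) g0]) (bm be) (bm c) r).
      * apply rst_sym. apply fbeq_step; [apply prep_typ; auto|apply prep_typ; auto|].
        exact (@fbr_l _ _ PP dag ddag (pvert hS) Q g0 (bm be, bm c) r).
      * assert (EA : prep hS (Q ++ [LG (lam (gm e)) g0]) (bm be) (bm c) r
                     = FBRep (gm ze) (Q ++ [LG (lam (gm e)) g0]) (@pbm _ _ _ B C ze (be, c)) r).
        { change (FBRep (gm ze) (Q ++ [LG (lam (gm e)) g0]) (@pbm _ _ _ B C ze (be, c)) r)
            with (prep (proj2_sig (gm ze)) (Q ++ [LG (lam (gm e)) g0]) (bm be) (bm c) r).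
          rewrite (proof_irrelevance _ hS (proj2_sig (gm ze))). reflexivity. }
        assert (EB : prep hS2 (Q ++ [LG (lam (gm e)) g0; LX (lam e)]) (bm (bb be)) (bm (bb c)) (LX (gb (rho z)) :: r)
                     = FBRep (gm (gb ze)) ((Q ++ [LG (lam (gm e)) g0]) ++ [LX (lam ze)]) (@pbm _ _ _ B C (gb ze) (@pbb _ _ _ B C ze (be, c))) (LX (gb (rho ze)) :: r)).
        { change (FBRep (gm (gb ze)) ((Q ++ [LG (lam (gm e)) g0]) ++ [LX (lam ze)]) (@pbm _ _ _ B C (gb ze) (@pbb _ _ _ B C ze (be, c))) (LX (gb (rho ze)) :: r))
            with (prep (proj2_sig (gm (gb ze))) ((Q ++ [LG (lam (gm e)) g0]) ++ [LX (lam e)]) (bm (bb be)) (bm (bb c)) (LX (gb (rho z)) :: r)).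
          rewrite (proof_irrelevance _ hS2 (proj2_sig (gm (gb ze)))), <- app_assoc. reflexivity. }
        rewrite EA, EB. apply fbeq_step.
        -- rewrite <- EA. apply prep_typ; auto.
        -- rewrite <- EB. apply prep_typ; auto; apply gmV.
        -- exact (@fbr_e _ _ PP dag ddag ze (Q ++ [LG (lam (gm e)) g0]) (be, c) r hze).
Qed.

Lemma Psi_ft (t t' : fbrep B * fbrep C) : fteq dag star ddag t t' -> ORr (Psi t) (Psi t').
Proof.
  intro H. apply OR_crst with (2 := H). clear t t' H.
  intros t t' [[Ht1 Ht2] [[Ht1' Ht2'] Hr]].
  destruct Hr as [r1 r1' s H | r1 s s' H | r1 s p Hp]; cbn [fst snd] in *.
  - apply OR_crst with (f := fun r => Psi (r, s)) (2 := H).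
    intros a b' [Ha [Hb Hab]]. apply Psi_B_rel; auto.
  - apply OR_crst with (f := fun s0 => Psi (r1, s0)) (2 := H).
    intros a b' [Ha [Hb Hab]]. apply Psi_C_rel; auto.
  - unfold Psi, fb_ract, fb_lact; cbn [fst snd rz rq rb rp]. rewrite <- app_assoc. apply OR_refl.
Qed.
End Main2.


Section Main3.
Variables (Y X W : gog) (B : gob Y X) (C : gob X W).
Hypotheses (hY : gog_valid Y) (hX : gog_valid X) (hW : gog_valid W)
  (hB : gob_valid B) (hC : gob_valid C)
  (hBl : leibniz_gob B) (hCl : leibniz_gob C) (hfib : left_fibrant B).
Variables (dag : Y) (star : X) (ddag : W).
Hypotheses (hdag : gm dag = dag) (hstar : gm star = star) (hddag : gm ddag = ddag).

Notation PP := (P B C).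
Notation ORr := (@OR Y X W B C dag ddag).

Notation FF := (@F Y X W B C star).

Lemma Psi_F s : fb_typ dag ddag s -> ORr (Psi (FF s)) (Some s).
Proof.
  destruct s as [[[v w] h] q [b c] r]. simpl in h. intros [hz [hq hr]].
  destruct (pz_gm hz) as [hv hw]; unfold pz1, pz2 in *; cbn in hv, hw, hq, hr.
  unfold F, Psi, pz1, pz2; cbn [fst snd rz rq rb rp proj1_sig].
  assert (hP : wpath (rho v) star (Pch star (rho v))) by (apply (Pch_spec hX hstar), gm_rho_vert; auto).
  eapply OR_trans.
  - apply toP_steq; auto. apply (push_weq hY hX hB hBl hfib) with (rho v); [apply TS_init; auto|].
    rewrite <- h. eapply weq_inv_r; eauto.
  - unfold push; cbn [fold_left]. unfold toP. destruct (dec_eq _ _) as [h1|n]; [|contradiction]. simpl. rewrite (proof_irrelevance _ h1 h). apply rst_refl.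
Qed.

Lemma F_inj s s' : fb_typ dag ddag s -> fb_typ dag ddag s' ->
  fteq dag star ddag (FF s) (FF s') -> fbeq dag ddag s s'.
Proof.
  intros Hs Hs' H. pose proof (Psi_ft hY hX hB hBl hCl hfib H) as H1.
  pose proof (Psi_F Hs) as H2. pose proof (Psi_F Hs') as H3.
  exact (OR_trans (OR_trans (OR_sym H2) H1) H3).
Qed.

Lemma step_fb u u' (st : St B) a Pt : TS dag u st -> wpath u u' [a] -> wpath u' star Pt ->
  fbeq dag star (FBRep (sv st) (sq st) (sb st) (a :: Pt))
    (FBRep (sv (step st a)) (sq (step st a)) (sb (step st a)) Pt).
Proof.
  destruct st as [v q b]; intros [hv [hu hq]] Ha hP; cbn [sv sq sb] in *.
  destruct a as [x | w g].
  - simpl in Ha; destruct Ha as [hx1 hx2].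
    assert (hxP : wpath (rho v) star (LX x :: Pt)) by (split; [rewrite hu; auto|rewrite hx2; auto]).
    destruct (dec_eq (gm x) x) as [hx|hx].
    + rewrite step_LX_vert by auto. cbn [sv sq sb].
      apply fbeq_step; [split; [|split]; auto|split; [|split]; auto|].
      * simpl. rewrite hu, <- hx1, hx. rewrite <- (gp_vert hx) at 1. rewrite hx2; auto.
      * apply fbr_p. exact (LX_vert_weq (l := []) hx hxP).
    + assert (hfv : gm x = rho v) by (rewrite hu; auto).
      destruct (fib_surj hBl hfib hv hfv hx b) as [d Hd]. rewrite (step_LX_edge _ hx Hd).
      pose proof (dec_some Hd) as Eb. pose proof (out_typ d hv hfv hq) as To.
      destruct d as [e hr hs g be]. unfold fibmap in Eb; cbn [fe fg fb fe_src] in Eb. subst x v b.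
      unfold out in *; cbn [fe fg fb sv sq sb] in *.
      destruct To as [To1 [To2 To3]]; cbn [sv sq sb] in *.
      assert (hre : gm (rho e) <> rho e) by auto.
      assert (he : gm e <> e) by (intro H; apply hre; rewrite <- gmap_m, H; auto).
      assert (T1 : wpath dag (lam (gm e)) (q ++ [LG (lam (gm e)) g])).
      { apply wpath_app with (lam (gm e)); auto. simpl. split; [apply gm_lam_vert; auto|auto]. }
      assert (hP2 : wpath (rho (gm (gb e))) star (LX (gb (rho e)) :: LX (rho e) :: Pt)).
      { split; [rewrite gmap_m, gmap_b; auto|]. rewrite gp_gb. split; auto. rewrite hx2; auto. }
      apply rst_trans with (FBRep (gm e) (q ++ [LG (lam (gm e)) g]) (bm be) (LX (rho e) :: Pt)).
      { apply rst_sym. apply fbeq_step; [split; [|split]; auto|split; [|split]; auto|].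
        exact (@fbr_l _ _ B dag star (gm e) q g (bm be) (LX (rho e) :: Pt)). }
      apply rst_trans with (FBRep (gm (gb e)) ((q ++ [LG (lam (gm e)) g]) ++ [LX (lam e)]) (bm (bb be))
                             (LX (gb (rho e)) :: LX (rho e) :: Pt)).
      { apply fbeq_step; [split; [|split]; auto|split; [|split]; auto; try apply gmV|].
        - rewrite <- app_assoc; exact To3.
        - apply fbr_e; auto. }
      apply fbeq_step; [split; [|split]; auto; try apply gmV; rewrite <- app_assoc; exact To3
                       |split; [|split]; auto; try apply gmV; cbn [rz rp]; rewrite To2, hx2; exact hP|].
      rewrite <- app_assoc. apply fbr_p.
        replace (LX (rho e)) with (LX (gb (gb (rho e)))) by (rewrite gbK; auto).
        apply (weq_fwd' (l := []) (a := [LX (gb (rho e)); LX (gb (gb (rho e)))]) (b := []) (r := Pt));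
          [constructor| |reflexivity|reflexivity].
        rewrite gbK; exact hP2.
  - simpl in Ha. destruct Ha as [h1 [h2 h3]].
    assert (e : w = rho v) by (rewrite h2; auto).
    rewrite (step_LG_eq q b g e). cbn [sv sq sb]. rewrite (LG_tr e g).
    apply rst_sym. apply fbeq_step; [split; [|split]; auto; cbn [rz rp]; rewrite hu, <- h2, h3; exact hP
                                  |split; [|split]; auto; simpl; split; [apply gm_rho_vert; auto|split; [auto|rewrite hu, <- h2, h3; exact hP]]|].
    apply fbr_r.
Qed.

Lemma push_fb (st : St B) u u' Wd Pt : TS dag u st -> wpath u u' Wd -> wpath u' star Pt ->
  fbeq dag star (FBRep (sv st) (sq st) (sb st) (Wd ++ Pt))
    (FBRep (sv (push st Wd)) (sq (push st Wd)) (sb (push st Wd)) Pt).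
Proof.
  revert st u; induction Wd as [|a Wd IH]; intros st u Ts HW HP.
  - apply rst_refl.
  - destruct (@wpath_app_inv X u u' [a] Wd HW) as [u1 [H1 H2]].
    eapply rst_trans.
    + apply (step_fb (Pt := Wd ++ Pt) Ts H1). apply wpath_app with u'; auto.
    + apply (IH (step st a) u1); auto. eapply step_typ; eauto.
Qed.

Lemma F_surj t : ft_typ dag star ddag t -> exists s, fb_typ dag ddag s /\ fteq dag star ddag (FF s) t.
Proof.
  destruct t as [[v q b p] [w q2 c r]]; intros [[hv [hq hp]] [hw [hq2 hr]]]; cbn [fst snd rz rq rb rp] in *.
  pose proof (push_typ hBl hfib (TS_init b hv hq) (wpath_app hp hq2)) as T.
  pose proof (push_fb (Pt := winv q2) (TS_init b hv hq) (wpath_app hp hq2)) as PC.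
  destruct (push (MkSt v q b) (p ++ q2)) as [v' Q b'] eqn:ES. destruct T as [hv' [hS hQ]]; cbn [sv sq sb] in *.
  assert (hiq : wpath (lam w) star (winv q2)) by (apply wpath_winv; auto).
  specialize (PC ltac:(auto)). cbn [sv sq sb] in PC.
  exists (prep hS Q b' c r). split; [apply prep_typ; auto|].
  eapply rst_trans; [apply (F_prep hX hstar (p := winv q2)); [apply prep_typ; auto|rewrite hS; auto]|].
  rewrite winv_winv.
  apply fteq_step; [split; [split; [|split]|split; [|split]]; cbn [fst snd rz rq rb rp]; auto; try (rewrite hS; exact hiq)
                   |split; [split; [|split]|split; [|split]]; auto|].
  apply ftr_1. apply rst_sym.
  assert (hpq : wpath (rho v) star ((p ++ q2) ++ winv q2)) by (apply wpath_app with (lam w); auto; apply wpath_app with star; auto).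
  eapply rst_trans; [|exact PC].
  apply fbeq_step; [split; [|split]; auto|split; [|split]; auto|].
  apply fbr_p. apply rst_sym. rewrite <- app_assoc.
  eapply rst_trans; [apply weq_app_l with star; [eapply weq_inv_r; exact hq2|exact hp]|].
  rewrite app_nil_r. apply rst_refl.
Qed.
End Main3.

Theorem mainTheorem12' (Y X W : gog) (B : gob Y X) (C : gob X W)
  (hY : gog_valid Y) (hX : gog_valid X) (hW : gog_valid W)
  (hB : gob_valid B) (hC : gob_valid C)
  (hBl : leibniz_gob B) (hCl : leibniz_gob C)
  (hfib : left_fibrant B)
  (dag : Y) (star : X) (ddag : W)
  (hdag : gm dag = dag) (hstar : gm star = star) (hddag : gm ddag = ddag) :
  exists F : fbrep (gob_prod B C) -> fbrep B * fbrep C,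
    (forall s, fb_typ dag ddag s -> ft_typ dag star ddag (F s)) /\
    (forall s s', fb_typ dag ddag s -> fb_typ dag ddag s' ->
       fbeq dag ddag s s' -> fteq dag star ddag (F s) (F s')) /\
    (forall (v : B) (w : C) (h : rho v = lam w) q (b : Bs v) (c : Bs w) r p,
       fb_typ dag ddag (prep h q b c r) ->
       wpath (rho v) star p ->
       fteq dag star ddag (F (prep h q b c r))
            (FBRep v q b p, FBRep w (winv p) c r)) /\
    (forall s q' r', fb_typ dag ddag s -> wpath dag dag q' -> wpath ddag ddag r' ->
       fteq dag star ddag (F (fb_ract (fb_lact q' s) r'))
            (fb_lact q' (fst (F s)), fb_ract (snd (F s)) r')) /\
    (forall s s', fb_typ dag ddag s -> fb_typ dag ddag s' ->
       fteq dag star ddag (F s) (F s') -> fbeq dag ddag s s') /\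
    (forall t, ft_typ dag star ddag t ->
       exists s, fb_typ dag ddag s /\ fteq dag star ddag (F s) t).
Proof.
  exists (@F Y X W B C star). split; [|split; [|split; [|split; [|split]]]].
  - intros s Hs. apply (F_typ hX hstar Hs).
  - intros s s' Hs Hs' H. apply (F_fbeq hX hB hBl hCl hfib hstar Hs Hs' H).
  - intros v w h q b c r p Hs Hp. apply (F_prep hX hstar Hs Hp).
  - intros s q' r' _ _ _. apply rst_refl.
  - intros s s' Hs Hs' H. apply (F_inj hY hX hB hBl hCl hfib hstar Hs Hs' H).
  - intros t Ht. apply (F_surj hX hBl hfib hstar Ht).
Qed.

Theorem mainTheorem12 (Y X W : gog) (B : gob Y X) (C : gob X W)
  (hY : gog_valid Y) (hX : gog_valid X) (hW : gog_valid W)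
  (hB : gob_valid B) (hC : gob_valid C)
  (hBl : leibniz_gob B) (hCl : leibniz_gob C)
  (hfib : left_fibrant B)
  (dag : Y) (star : X) (ddag : W)
  (hdag : gm dag = dag) (hstar : gm star = star) (hddag : gm ddag = ddag) :
  exists F : fbrep (gob_prod B C) -> fbrep B * fbrep C,
    (* F maps pi_1(B (x) C, dag, ddag) into
       pi_1(B, dag, star) (x)_{pi_1(X, star)} pi_1(C, star, ddag) *)
    (forall s, fb_typ dag ddag s -> ft_typ dag star ddag (F s)) /\
    (* F is well defined on the quotient *)
    (forall s s', fb_typ dag ddag s -> fb_typ dag ddag s' ->
       fbeq dag ddag s s' -> fteq dag star ddag (F s) (F s')) /\
    (* F is the map  q (b (x) c) r |-> (q b p) (x) (p^-1 c r), for any p *)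
    (forall (v : B) (w : C) (h : rho v = lam w) q (b : Bs v) (c : Bs w) r p,
       fb_typ dag ddag (prep h q b c r) ->
       wpath (rho v) star p ->
       fteq dag star ddag (F (prep h q b c r))
            (FBRep v q b p, FBRep w (winv p) c r)) /\
    (* F is a biset morphism *)
    (forall s q' r', fb_typ dag ddag s -> wpath dag dag q' -> wpath ddag ddag r' ->
       fteq dag star ddag (F (fb_ract (fb_lact q' s) r'))
            (fb_lact q' (fst (F s)), fb_ract (snd (F s)) r')) /\
    (* F is injective on the quotient *)
    (forall s s', fb_typ dag ddag s -> fb_typ dag ddag s' ->
       fteq dag star ddag (F s) (F s') -> fbeq dag ddag s s') /\
    (* F is surjective on the quotient *)
    (forall t, ft_typ dag star ddag t ->
       exists s, fb_typ dag ddag s /\ fteq dag star ddag (F s) t).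
Proof.
  exact (@mainTheorem12' Y X W B C hY hX hW hB hC hBl hCl hfib dag star ddag hdag hstar hddag).
Qed.
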